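(* Let $A$ be a left counital bialgebra and let $\mu_T:\mathbf{k}\to Ш(A)$, $c\mapsto c1_A$. Then $(Ш(A),\diamond,\mu_T,\Delta_T,\varepsilon_T,P_r)$ is a left counital cocycle bialgebra; that is: $(Ш(A),\diamond,\mu_T)$ is a commutative unital algebra on which $P_r$ is a Nijenhuis operator; $\Delta_T$ and $\varepsilon_T$ are algebra homomorphisms; $\Delta_T$ is coassociative; $(\varepsilon_T\otimes\mathrm{id})\Delta_T=\beta_\ell$ (where $\beta_\ell(\mathfrak a)=1\otimes\mathfrak a$); and the one-cocycle property $\Delta_TP_r=(\mathrm{id}\otimes P_r)\Delta_T$ holds.
   Context: Throughout, $\mathbf{k}$ is a commutative unital ring, all algebras are unital commutative $\mathbf{k}$-algebras, tensor products are over $\mathbf{k}$. A left counital bialgebra $(H,m,\mu,\Delta,\varepsilon)$ is an algebra $H$ with algebra homomorphisms $\Delta:H\to H\otimes H$ (coassociative) and $\varepsilon:H\to\mathbf{k}$ satisfying left counicity $(\varepsilon\otimes\mathrm{id})\Delta=\beta_\ell$, where $\beta_\ell(u)=1\otimes u$; right counicity is not required. A Nijenhuis operator on an algebra $R$ is a linear $P:R\to R$ with $P(x)P(y)=P(P(x)y)+P(xP(y))-P^2(xy)$. For an algebra $A$ with unit $1_A$, $Ш(A)=\bigoplus_{n\ge1}A^{\otimes n}$, $P_r(\mathfrak a)=1_A\otimes\mathfrak a$, and the product $\diamond$ is defined bilinearly on pure tensors $\mathfrak a=a_1\otimes\mathfrak a'\in A^{\otimes m}$, $\mathfrak b=b_1\otimes\mathfrak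 b'\in A^{\otimes n}$ by: $a_1b_1$ if $m=n=1$; $a_1b_1\otimes\mathfrak b'$ if $m=1,n\ge2$; $a_1b_1\otimes\mathfrak a'$ if $m\ge2,n=1$; $a_1b_1\otimes\big(\mathfrak a'\diamond(1_A\otimes\mathfrak b')+(1_A\otimes\mathfrak a')\diamond\mathfrak b'-1_A\otimes(\mathfrak a'\diamond\mathfrak b')\big)$ if $m,n\ge2$. $Ш(A)\otimes Ш(A)$ has the product $\bullet$, $(x\otimes y)\bullet(x'\otimes y')=(x\diamond x')\otimes(y\diamond y')$, and $A\otimes A\subseteq Ш(A)\otimes Ш(A)$ via $A=A^{\otimes1}$. When $A$ is a left counital bialgebra with coproduct $\Delta_A$ and counit $\varepsilon_A$: the linear map $\Delta_T:Ш(A)\to Ш(A)\otimes Ш(A)$ is defined on pure tensors by induction on tensor length: $\Delta_T(a)=\Delta_A(a)$ for $a\in A$, and for $\mathfrak a'\in A^{\otimes n}$, $\Delta_T(1_A\otimes\mathfrak a')=(\mathrm{id}\otimes P_r)\Delta_T(\mathfrak a')$ and $\Delta_T(a_1\otimes\mathfrak a')=\Delta_A(a_1)\bullet(\mathrm{id}\otimes P_r)\Delta_T(\mathfrak a')$; and $\varepsilon_T:Ш(A)\to\mathbf{k}$ is the linear map $\varepsilon_T(a_1\otimes\cdots\otimes a_n)=\varepsilon_A(a_1)\cdots\varepsilon_A(a_n)$. *)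

(* Defs.v *)
From HB Require Import structures.
From mathcomp Require Import all_boot all_order all_algebra.
Set Implicit Arguments.
Unset Strict Implicit.
Unset Printing Implicit Defensive.
Import GRing.Theory.
Local Open Scope ring_scope.

(* Tensor products over a commutative ring k are modelled by formal finite
   k-linear combinations of "pure tensors" (lists of pairs (coefficient, pure
   tensor)), two combinations being identified when every multilinear map into
   every k-module takes the same value on them (this is exactly equality in the
   tensor product). *)

Section Tensors.
Variables (k : comPzRingType) (A : comPzRingType) (iota : {rmorphism k -> A}).
(* A is a commutative unital k-algebra, given by its structure map iota;
   scalar multiplication is c . a := iota c * a. *)

Definition fcomb (X : Type) := seq (k * X).

Definition scalec (X : Type) (c : k) (x : fcomb X) : fcomb X :=
  [seq (c * p.1, p.2) | p <- x].

Definition negc (X : Type) (x : fcomb X) : fcomb X := scalec (-1) x.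

Definition feval (X : Type) (M : lmodType k) (f : X -> M) (x : fcomb X) : M :=
  \sum_(p <- x) p.1 *: f p.2.

Definition multilin (M : lmodType k) (f : seq A -> M) : Prop :=
  forall (u v : seq A) (c : k) (a b : A),
    f (u ++ (iota c * a + b) :: v) = c *: f (u ++ a :: v) + f (u ++ b :: v).

Definition lin1 (M : lmodType k) (f : A -> M) : Prop :=
  forall (c : k) (a b : A), f (iota c * a + b) = c *: f a + f b.

Definition eqAA (x y : fcomb (A * A)) : Prop :=
  forall (M : lmodType k) (f : A -> A -> M),
    (forall b, lin1 (f^~ b)) -> (forall a, lin1 (f a)) ->
    feval (fun p => f p.1 p.2) x = feval (fun p => f p.1 p.2) y.

Definition eqAAA (x y : fcomb (A * A * A)) : Prop :=
  forall (M : lmodType k) (f : A -> A -> A -> M),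
    (forall b d, lin1 (fun a => f a b d)) ->
    (forall a d, lin1 (fun b => f a b d)) ->
    (forall a b, lin1 (fun d => f a b d)) ->
    feval (fun p => f p.1.1 p.1.2 p.2) x = feval (fun p => f p.1.1 p.1.2 p.2) y.

Definition mulAA (x y : fcomb (A * A)) : fcomb (A * A) :=
  [seq (p.1 * q.1, (p.2.1 * q.2.1, p.2.2 * q.2.2)) | p <- x, q <- y].

Definition left_counital_bialgebra (DA : A -> fcomb (A * A)) (eA : A -> k) : Prop :=
  [/\
      (forall c a b, eqAA (DA (iota c * a + b)) (scalec c (DA a) ++ DA b)),
      (forall a b, eqAA (DA (a * b)) (mulAA (DA a) (DA b)))
        /\ eqAA (DA 1) [:: (1, (1, 1))],
      (forall a, eqAAA
         (flatten [seq [seq (p.1 * q.1, (q.2.1, q.2.2, p.2.2)) | q <- DA p.2.1] | p <- DA a])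
         (flatten [seq [seq (p.1 * q.1, (p.2.1, q.2.1, q.2.2)) | q <- DA p.2.2] | p <- DA a])),
      (forall c a b, eA (iota c * a + b) = c * eA a + eA b)
        /\ (forall a b, eA (a * b) = eA a * eA b) /\ eA 1 = 1 &
      (* left counicity  (eps (x) id) Delta = beta_l, with k (x) A = A *)
      (forall a, \sum_(p <- DA a) iota (p.1 * eA p.2.1) * p.2.2 = a)].

(* a nonempty word a1 (x) ... (x) an is stored as (a1, [:: a2; ...; an]) *)
Definition nw := (A * seq A)%type.
Definition wd (w : nw) : seq A := w.1 :: w.2.

Definition Sha := fcomb nw.
Definition Sha2 := fcomb (nw * nw).
Definition Sha3 := fcomb (nw * nw * nw).

Definition eqSh (x y : Sha) : Prop :=
  forall (M : lmodType k) (f : seq A -> M), multilin f ->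
    feval (fun w => f (wd w)) x = feval (fun w => f (wd w)) y.

Definition eqSh2 (x y : Sha2) : Prop :=
  forall (M : lmodType k) (f : seq A -> seq A -> M),
    (forall v, multilin (f^~ v)) -> (forall u, multilin (f u)) ->
    feval (fun p => f (wd p.1) (wd p.2)) x = feval (fun p => f (wd p.1) (wd p.2)) y.

Definition eqSh3 (x y : Sha3) : Prop :=
  forall (M : lmodType k) (f : seq A -> seq A -> seq A -> M),
    (forall v w, multilin (fun u => f u v w)) ->
    (forall u w, multilin (fun v => f u v w)) ->
    (forall u v, multilin (fun w => f u v w)) ->
    feval (fun p => f (wd p.1.1) (wd p.1.2) (wd p.2)) x
    = feval (fun p => f (wd p.1.1) (wd p.1.2) (wd p.2)) y.

Definition prefix (a : A) (x : Sha) : Sha := [seq (p.1, (a, wd p.2)) | p <- x].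

(* the product on pure tensors (a1 (x) a') <> (b1 (x) b'), by recursion with
   fuel n (n = size a' + size b' + 1 is enough) *)
Fixpoint diaw (n : nat) (a1 : A) (a' : seq A) (b1 : A) (b' : seq A) : Sha :=
  match n with
  | 0 => [::]
  | n'.+1 =>
    match a', b' with
    | [::], [::] => [:: (1, (a1 * b1, [::]))]
    | [::], _ :: _ => [:: (1, (a1 * b1, b'))]
    | _ :: _, [::] => [:: (1, (a1 * b1, a'))]
    | a2 :: a'', b2 :: b'' =>
        prefix (a1 * b1)
          (diaw n' a2 a'' 1 b' ++ diaw n' 1 a' b2 b''
           ++ negc (prefix 1 (diaw n' a2 a'' b2 b'')))
    end
  end.

Definition dia_word (x y : nw) : Sha :=
  diaw (size x.2 + size y.2).+1 x.1 x.2 y.1 y.2.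

Definition dia (x y : Sha) : Sha :=
  flatten [seq scalec (p.1 * q.1) (dia_word p.2 q.2) | p <- x, q <- y].

Definition muT (c : k) : Sha := [:: (c, (1, [::]))].

Definition Pr (x : Sha) : Sha := [seq (p.1, (1, wd p.2)) | p <- x].

Definition bul (x y : Sha2) : Sha2 :=
  flatten [seq [seq (p.1 * q.1 * r.1 * s.1, (r.2, s.2))
               | r <- dia_word p.2.1 q.2.1, s <- dia_word p.2.2 q.2.2]
          | p <- x, q <- y].

Definition unit2 : Sha2 := [:: (1, ((1, [::]), (1, [::])))].

Definition idPr (x : Sha2) : Sha2 := [seq (p.1, (p.2.1, (1, wd p.2.2))) | p <- x].

Definition liftAA (x : fcomb (A * A)) : Sha2 :=
  [seq (p.1, ((p.2.1, [::]), (p.2.2, [::]))) | p <- x].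

Section Coproduct.
Variables (DA : A -> fcomb (A * A)) (eA : A -> k).

Fixpoint DTl (a1 : A) (a' : seq A) : Sha2 :=
  match a' with
  | [::] => liftAA (DA a1)
  | a2 :: a'' =>
      if a1 == 1 then idPr (DTl a2 a'')
      else bul (liftAA (DA a1)) (idPr (DTl a2 a''))
  end.

Definition DT (x : Sha) : Sha2 :=
  flatten [seq scalec p.1 (DTl p.2.1 p.2.2) | p <- x].

Definition eTw (w : nw) : k := eA w.1 * \prod_(a <- w.2) eA a.

Definition eT (x : Sha) : k := \sum_(p <- x) p.1 * eTw p.2.

Definition DT_id (y : Sha2) : Sha3 :=
  flatten [seq [seq (p.1 * q.1, (q.2.1, q.2.2, p.2.2)) | q <- DTl p.2.1.1 p.2.1.2]
          | p <- y].

Definition id_DT (y : Sha2) : Sha3 :=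
  flatten [seq [seq (p.1 * q.1, (p.2.1, q.2.1, q.2.2)) | q <- DTl p.2.2.1 p.2.2.2]
          | p <- y].

(* (eps_T (x) id) Delta_T, with k (x) Sha(A) = Sha(A) *)
Definition eT_id (y : Sha2) : Sha := [seq (p.1 * eTw p.2.1, p.2.2) | p <- y].

End Coproduct.
End Tensors.

(* Main.v *)
Require Import Defs.
From HB Require Import structures.
From mathcomp Require Import all_boot all_order all_algebra.
From Stdlib Require Import Setoid Morphisms Lia.
From mathcomp Require Import zify ring.
Import GRing.Theory.
Local Open Scope ring_scope.

Module MP1.
Set Implicit Arguments.
Unset Strict Implicit.
Unset Printing Implicit Defensive.
Import GRing.Theory.
Local Open Scope ring_scope.

Section Basics.
Variable k : comPzRingType.

Lemma feval_nil T (M : lmodType k) (g : T -> M) : feval g [::] = 0.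
Proof. by rewrite /feval big_nil. Qed.

Lemma feval_cons T (M : lmodType k) (g : T -> M) p x :
  feval g (p :: x) = p.1 *: g p.2 + feval g x.
Proof. by rewrite /feval big_cons. Qed.

Lemma feval_cat T (M : lmodType k) (g : T -> M) x y :
  feval g (x ++ y) = feval g x + feval g y.
Proof. by rewrite /feval big_cat. Qed.

Lemma feval_scalec T (M : lmodType k) (g : T -> M) c x :
  feval g (scalec c x) = c *: feval g x.
Proof.
elim: x => [|p x IH]; first by rewrite /scalec /= feval_nil scaler0.
by rewrite /scalec /= !feval_cons -/(scalec c x) IH scalerDr scalerA.
Qed.

Lemma feval_negc T (M : lmodType k) (g : T -> M) x :
  feval g (negc x) = - feval g x.
Proof. by rewrite /negc feval_scalec scaleN1r. Qed.

Lemma feval_ext T (M : lmodType k) (g g' : T -> M) x :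
  (forall t, g t = g' t) -> feval g x = feval g' x.
Proof. by move=> E; rewrite /feval; apply: eq_bigr => p _; rewrite E. Qed.

Lemma feval_map T U (M : lmodType k) (g : U -> M) (h : T -> U) (x : fcomb k T) :
  feval g [seq (p.1, h p.2) | p <- x] = feval (fun t => g (h t)) x.
Proof. by rewrite /feval big_map. Qed.

Lemma feval_flatten T (M : lmodType k) (g : T -> M) (l : seq (fcomb k T)) :
  feval g (flatten l) = \sum_(x <- l) feval g x.
Proof.
elim: l => [|x l IH]; first by rewrite /= big_nil feval_nil.
by rewrite /= feval_cat big_cons IH.
Qed.

Lemma feval_lin T U (M : lmodType k) (g : U -> M) (phi : T -> fcomb k U) x :
  feval g (flatten [seq scalec p.1 (phi p.2) | p <- x]) =
  feval (fun t => feval g (phi t)) x.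
Proof.
rewrite feval_flatten big_map /feval; apply: eq_bigr => p _.
by rewrite -/(feval _ _) feval_scalec.
Qed.

Lemma feval_pairs T U V (M : lmodType k) (g : V -> M) (E : (k * T) -> (k * U) -> fcomb k V)
  (x : fcomb k T) (y : fcomb k U) :
  feval g (flatten [seq E p q | p <- x, q <- y]) =
  \sum_(p <- x) \sum_(q <- y) feval g (E p q).
Proof.
rewrite feval_flatten /allpairs big_flatten /= big_map; apply: eq_bigr => p _.
by rewrite big_map.
Qed.

Lemma feval_swap T U (M : lmodType k) (h : T -> U -> M) x y :
  feval (fun u => feval (fun v => h u v) y) x =
  feval (fun v => feval (fun u => h u v) x) y.
Proof.
rewrite /feval.
under eq_bigr do rewrite scaler_sumr.
rewrite exchange_big /=; apply: eq_bigr => q _.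
rewrite scaler_sumr; apply: eq_bigr => p _.
by rewrite !scalerA mulrC.
Qed.

Lemma feval_sum T I (M : lmodType k) (r : seq I) (h : I -> T -> M) x :
  feval (fun t => \sum_(i <- r) h i t) x = \sum_(i <- r) feval (h i) x.
Proof.
rewrite /feval.
under eq_bigr do rewrite scaler_sumr.
by rewrite exchange_big.
Qed.

Lemma feval_add T (M : lmodType k) (g1 g2 : T -> M) x :
  feval (fun t => g1 t + g2 t) x = feval g1 x + feval g2 x.
Proof. by rewrite /feval -big_split; apply: eq_bigr => p _; rewrite scalerDr. Qed.

Lemma feval_scale T (M : lmodType k) c (g : T -> M) x :
  feval (fun t => c *: g t) x = c *: feval g x.
Proof. by rewrite /feval scaler_sumr; apply: eq_bigr => p _; rewrite !scalerA mulrC. Qed.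

Lemma feval_opp T (M : lmodType k) (g : T -> M) x :
  feval (fun t => - g t) x = - feval g x.
Proof. by rewrite /feval -sumrN; apply: eq_bigr => p _; rewrite scalerN. Qed.

Lemma feval0 T (M : lmodType k) x : feval (fun _ : T => (0 : M)) x = 0.
Proof. by rewrite /feval big1 // => p _; rewrite scaler0. Qed.

Lemma feval_single T (M : lmodType k) (g : T -> M) t : feval g [:: (1, t)] = g t.
Proof. by rewrite feval_cons feval_nil addr0 scale1r. Qed.

End Basics.

End MP1.
Import MP1.

Module MP2.
Set Implicit Arguments.
Unset Strict Implicit.
Unset Printing Implicit Defensive.
Import GRing.Theory.
Local Open Scope ring_scope.

Definition EQF (k : comPzRingType) T (x y : fcomb k T) :=
  forall (M : lmodType k) (g : T -> M), feval g x = feval g y.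

#[export] Instance EQF_equiv k T : Equivalence (@EQF k T).
Proof.
split; first by move=> x M g.
- by move=> x y H M g; rewrite H.
- by move=> x y z H1 H2 M g; rewrite H1 H2.
Qed.

Section Dia.
Variable (k A : comPzRingType).
Notation Sh := (Sha k A).
Notation EQ := (@EQF k (nw A)).

Definition delta (a : A) : Sh := [:: (1, (a, [::]))].

Lemma feval_dia (M : lmodType k) (g : nw A -> M) (X Y : Sh) :
  feval g (dia X Y) = feval (fun u => feval (fun v => feval g (dia_word k u v)) Y) X.
Proof.
rewrite /dia feval_pairs /feval; apply: eq_bigr => p _.
rewrite scaler_sumr; apply: eq_bigr => q _.
by rewrite -/(feval _ _) feval_scalec scalerA.
Qed.

Lemma feval_prefix (M : lmodType k) (g : nw A -> M) a (X : Sh) :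
  feval g (Defs.prefix a X) = feval (fun w => g (a, wd w)) X.
Proof. by rewrite /feval big_map. Qed.

Lemma feval_Pr (M : lmodType k) (g : nw A -> M) (X : Sh) :
  feval g (Pr X) = feval (fun w => g (1, wd w)) X.
Proof. by rewrite /feval big_map. Qed.

#[export] Instance dia_Proper : Proper (EQ ==> EQ ==> EQ) (@dia k A).
Proof.
move=> x x' Hx y y' Hy M g; rewrite !feval_dia Hx.
by apply: feval_ext => u; rewrite Hy.
Qed.

#[export] Instance prefix_Proper a : Proper (EQ ==> EQ) (@Defs.prefix k A a).
Proof. by move=> x x' Hx M g; rewrite !feval_prefix Hx. Qed.

#[export] Instance Pr_Proper : Proper (EQ ==> EQ) (@Pr k A).
Proof. by move=> x x' Hx M g; rewrite !feval_Pr Hx. Qed.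

#[export] Instance cat_Proper T : Proper (@EQF k T ==> @EQF k T ==> @EQF k T) (@cat _).
Proof. by move=> x x' Hx y y' Hy M g; rewrite !feval_cat Hx Hy. Qed.

#[export] Instance negc_Proper T : Proper (@EQF k T ==> @EQF k T) (@negc k T).
Proof. by move=> x x' Hx M g; rewrite !feval_negc Hx. Qed.

#[export] Instance scalec_Proper T c : Proper (@EQF k T ==> @EQF k T) (@scalec k T c).
Proof. by move=> x x' Hx M g; rewrite !feval_scalec Hx. Qed.

Lemma diaw_fuel n m (a1 : A) a' (b1 : A) b' :
  (size a' + size b' < n)%N -> (size a' + size b' < m)%N ->
  diaw k n a1 a' b1 b' = diaw k m a1 a' b1 b'.
Proof.
elim: n m a1 a' b1 b' => [|n IH] [|m] a1 a' b1 b' //= Hn Hm.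
case: a' Hn Hm => [|a2 a''] Hn Hm; case: b' Hn Hm => [|b2 b''] Hn Hm //=.
rewrite /= !addSn !addnS !ltnS in Hn Hm.
rewrite (IH m a2 a'' 1 (b2 :: b'')) /= ?addnS ?ltnS ?(ltnW Hn) ?(ltnW Hm) //.
rewrite (IH m 1 (a2 :: a'') b2 b'') /= ?addSn ?ltnS ?(ltnW Hn) ?(ltnW Hm) //.
rewrite (IH m a2 a'' b2 b'') ?(ltnW Hn) ?(ltnW Hm) //.
Qed.

Lemma dwE n (a1 : A) a' (b1 : A) b' : (size a' + size b' < n)%N ->
  diaw k n a1 a' b1 b' = dia_word k (a1, a') (b1, b').
Proof. by move=> H; rewrite /dia_word (diaw_fuel _ _ _ H). Qed.

Lemma dw11 (a b : A) : dia_word k (a, [::]) (b, [::]) = [:: (1, (a * b, [::]))] :> Sh.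
Proof. by []. Qed.

Lemma dw1L (a b : A) w : dia_word k (a, [::]) (b, wd w) = [:: (1, (a * b, wd w))] :> Sh.
Proof. by []. Qed.

Lemma dwL1 (a b : A) w : dia_word k (a, wd w) (b, [::]) = [:: (1, (a * b, wd w))] :> Sh.
Proof. by []. Qed.

Lemma dwLL (a b : A) u v : dia_word k (a, wd u) (b, wd v) =
  Defs.prefix (a * b) (dia_word k u (1, wd v) ++ dia_word k (1, wd u) v
     ++ negc (Pr (dia_word k u v))) :> Sh.
Proof.
case: u => u1 u2; case: v => v1 v2.
have E n : diaw k n.+1 a (u1::u2) b (v1::v2) = Defs.prefix (a*b)
  (diaw k n u1 u2 1 (v1::v2) ++ diaw k n 1 (u1::u2) v1 v2 ++
   negc (Defs.prefix 1 (diaw k n u1 u2 v1 v2))) by [].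
rewrite /dia_word /wd E.
by rewrite !dwE //= ?addnS ?addSn // ltnS leqW.
Qed.

End Dia.

End MP2.
Import MP2.

Module MP3.
Set Implicit Arguments.
Unset Strict Implicit.
Unset Printing Implicit Defensive.
Import GRing.Theory.
Local Open Scope ring_scope.

Section Dia2.
Variable (k A : comPzRingType).
Notation Sh := (Sha k A).
Notation EQ := (@EQF k (nw A)).
Notation dw := (dia_word k).

Lemma diaw_comm n (a1 : A) a' (b1 : A) b' (M : lmodType k) (g : nw A -> M) :
  feval g (diaw k n a1 a' b1 b') = feval g (diaw k n b1 b' a1 a').
Proof.
elim: n M g a1 a' b1 b' => [|n IH] M g a1 a' b1 b' //.
case: a' => [|a2 a'']; case: b' => [|b2 b''] /=; try by rewrite mulrC.
rewrite !feval_prefix mulrC.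
  rewrite !feval_cat !feval_negc !feval_prefix.
  rewrite (IH _ _ a2 a'' 1) (IH _ _ 1 (a2 :: a'')) (IH _ _ a2 a'').
  by rewrite addrA (addrC (feval _ (diaw k n 1 _ _ _))) -addrA.
Qed.

Lemma dw_comm u v (M : lmodType k) (g : nw A -> M) :
  feval g (dw u v) = feval g (dw v u).
Proof. by rewrite /dia_word diaw_comm addnC. Qed.

Lemma dia_comm (X Y : Sh) : EQ (dia X Y) (dia Y X).
Proof.
move=> M g; rewrite !feval_dia feval_swap.
by apply: feval_ext => v; apply: feval_ext => u; rewrite dw_comm.
Qed.

Lemma diaD1 (a b : A) : EQ (dia (delta k a) (delta k b)) (delta k (a * b)).
Proof. by move=> M g; rewrite feval_dia !feval_single. Qed.

Lemma diaD2 (a b : A) Y : EQ (dia (delta k a) (Defs.prefix b Y)) (Defs.prefix (a * b) Y).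
Proof.
move=> M g; rewrite feval_dia feval_single !feval_prefix.
by apply: feval_ext => v; rewrite dw1L feval_single.
Qed.

Lemma diaD3 (a b : A) X : EQ (dia (Defs.prefix a X) (delta k b)) (Defs.prefix (a * b) X).
Proof.
move=> M g; rewrite feval_dia !feval_prefix.
by apply: feval_ext => v; rewrite feval_single dwL1 feval_single.
Qed.

Lemma diaD4 (a b : A) X Y : EQ (dia (Defs.prefix a X) (Defs.prefix b Y))
  (Defs.prefix (a * b) (dia X (Pr Y) ++ dia (Pr X) Y ++ negc (Pr (dia X Y)))).
Proof.
move=> M g; rewrite feval_dia !feval_prefix !feval_cat !feval_negc !feval_dia.
rewrite (feval_Pr _ (dia X Y)) (feval_Pr _ X).
rewrite feval_dia -feval_opp -!feval_add; apply: feval_ext => u.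
rewrite feval_Pr.
rewrite feval_prefix -feval_opp -!feval_add; apply: feval_ext => v.
by rewrite dwLL feval_prefix !feval_cat feval_negc feval_Pr.
Qed.

Lemma dia_catl (X1 X2 Y : Sh) : EQ (dia (X1 ++ X2) Y) (dia X1 Y ++ dia X2 Y).
Proof. by move=> M g; rewrite feval_cat !feval_dia feval_cat. Qed.

Lemma dia_catr (X Y1 Y2 : Sh) : EQ (dia X (Y1 ++ Y2)) (dia X Y1 ++ dia X Y2).
Proof. by move=> M g; rewrite dia_comm dia_catl feval_cat !(dia_comm _ X) feval_cat. Qed.

Lemma dia_negl (X Y : Sh) : EQ (dia (negc X) Y) (negc (dia X Y)).
Proof. by move=> M g; rewrite feval_negc !feval_dia feval_negc. Qed.

Lemma dia_negr (X Y : Sh) : EQ (dia X (negc Y)) (negc (dia X Y)).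
Proof. by move=> M g; rewrite dia_comm dia_negl !feval_negc dia_comm. Qed.

Lemma dia_scalel c (X Y : Sh) : EQ (dia (scalec c X) Y) (scalec c (dia X Y)).
Proof. by move=> M g; rewrite feval_scalec !feval_dia feval_scalec. Qed.

Lemma dia_scaler c (X Y : Sh) : EQ (dia X (scalec c Y)) (scalec c (dia X Y)).
Proof. by move=> M g; rewrite dia_comm dia_scalel !feval_scalec dia_comm. Qed.

Lemma Pr_cat (X Y : Sh) : Pr (X ++ Y) = Pr X ++ Pr Y.
Proof. by rewrite /Pr map_cat. Qed.

Lemma Pr_neg (X : Sh) : EQ (Pr (negc X)) (negc (Pr X)).
Proof. by move=> M g; rewrite feval_Pr !feval_negc feval_Pr. Qed.

Lemma prefix_cat a (X Y : Sh) : Defs.prefix a (X ++ Y) = Defs.prefix a X ++ Defs.prefix a Y.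
Proof. by rewrite /Defs.prefix map_cat. Qed.

Lemma prefix_neg a (X : Sh) : EQ (Defs.prefix a (negc X)) (negc (Defs.prefix a X)).
Proof. by move=> M g; rewrite feval_prefix !feval_negc feval_prefix. Qed.

Lemma Nij (X Y : Sh) : EQ (dia (Pr X) (Pr Y))
  (Pr (dia X (Pr Y) ++ dia (Pr X) Y ++ negc (Pr (dia X Y)))).
Proof. by rewrite (diaD4 1 1 X Y) mulr1. Qed.

End Dia2.

End MP3.
Import MP3.

Module MP4.
Set Implicit Arguments.
Unset Strict Implicit.
Unset Printing Implicit Defensive.
Import GRing.Theory.
Local Open Scope ring_scope.

Lemma all_flatten' (T : Type) (P : pred T) (l : seq (seq T)) :
  all P (flatten l) = all (all P) l.
Proof. by elim: l => //= s l IH; rewrite all_cat IH. Qed.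

Section Bnd.
Variable (k A : comPzRingType).
Notation Sh := (Sha k A).
Notation EQ := (@EQF k (nw A)).
Notation dw := (dia_word k).

Definition bnd (N : nat) (X : Sh) := all (fun p => (size p.2.2 <= N)%N) X.

Lemma bnd_cat N (X Y : Sh) : bnd N X -> bnd N Y -> bnd N (X ++ Y).
Proof. by rewrite /bnd all_cat => -> ->. Qed.

Lemma bnd_scalec N c (X : Sh) : bnd N X -> bnd N (scalec c X).
Proof. by rewrite /bnd /scalec all_map. Qed.

Lemma bnd_negc N (X : Sh) : bnd N X -> bnd N (negc X).
Proof. exact: bnd_scalec. Qed.

Lemma bnd_prefix N a (X : Sh) : bnd N X -> bnd N.+1 (Defs.prefix a X).
Proof. by rewrite /bnd /Defs.prefix all_map. Qed.

Lemma bnd_Pr N (X : Sh) : bnd N X -> bnd N.+1 (Pr X).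
Proof. exact: bnd_prefix. Qed.

Lemma bnd_mono N N' (X : Sh) : (N <= N')%N -> bnd N X -> bnd N' X.
Proof.
move=> H /allP B; apply/allP => p /B /= H'; exact: leq_trans H' H.
Qed.

Lemma bnd_single (w : nw A) : bnd (size w.2) [:: (1, w)].
Proof. by rewrite /bnd /= leqnn. Qed.

Lemma bnd_diaw n (a1 : A) a' (b1 : A) b' :
  bnd (size a' + size b') (diaw k n a1 a' b1 b').
Proof.
elim: n a1 a' b1 b' => [|n IH] a1 a' b1 b' //.
case: a' => [|a2 a'']; case: b' => [|b2 b''] /=; rewrite /bnd /= ?andbT //.
  by rewrite addn0.
rewrite -/(bnd _ _) addSn.
apply: bnd_prefix; apply: bnd_cat; last apply: bnd_cat.
- exact: IH.
- by rewrite -addSnnS; apply: IH.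
- apply: bnd_negc; rewrite addnS; apply: bnd_Pr; exact: IH.
Qed.

Lemma bnd_dw (u v : nw A) : bnd (size u.2 + size v.2) (dw u v).
Proof. exact: bnd_diaw. Qed.

Lemma bnd_dia i j (X Y : Sh) : bnd i X -> bnd j Y -> bnd (i + j) (dia X Y).
Proof.
move=> /allP BX /allP BY; rewrite /bnd /dia all_flatten'.
apply/all_allpairsP => p q /BX Hp /BY Hq.
apply: bnd_scalec; apply: bnd_mono (bnd_dw _ _).
exact: leq_add.
Qed.

End Bnd.

Lemma feval_ext_in (k : comPzRingType) (T : eqType) (M : lmodType k) (g g' : T -> M) (x : fcomb k T) :
  (forall p, p \in x -> g p.2 = g' p.2) -> feval g x = feval g' x.
Proof.
move=> E; rewrite /feval big_seq_cond [RHS]big_seq_cond.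
by apply: eq_bigr => p /andP [Hp _]; rewrite E.
Qed.

Section Assoc.
Variable (k A : comPzRingType).
Notation Sh := (Sha k A).
Notation EQ := (@EQF k (nw A)).
Notation dw := (dia_word k).

Definition assocF (X Y Z : Sh) := EQ (dia (dia X Y) Z) (dia X (dia Y Z)).

Definition wassoc (u v w : nw A) := forall (M : lmodType k) (g : nw A -> M),
  feval (fun t => feval g (dw t w)) (dw u v) = feval (fun s => feval g (dw u s)) (dw v w).

Lemma assocF_w u v w : assocF [:: (1, u)] [:: (1, v)] [:: (1, w)] -> wassoc u v w.
Proof.
move=> H M g; move: (H M g).
rewrite feval_dia; under feval_ext => t do rewrite feval_single.
rewrite feval_dia !feval_single feval_dia feval_single feval_dia !feval_single.
by [].
Qed.

Lemma assoc_lift (X Y Z : Sh) :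
  (forall p q r, p \in X -> q \in Y -> r \in Z ->
     assocF [:: (1, p.2)] [:: (1, q.2)] [:: (1, r.2)]) -> assocF X Y Z.
Proof.
move=> H M g; rewrite !feval_dia.
under [RHS]feval_ext => u do rewrite feval_dia.
apply: feval_ext_in => p Hp; apply: feval_ext_in => q Hq.
rewrite feval_swap; apply: feval_ext_in => r Hr.
exact: (assocF_w (H p q r Hp Hq Hr)).
Qed.

End Assoc.

End MP4.
Import MP4.

Module MZ.
Set Implicit Arguments.
Unset Strict Implicit.
Unset Printing Implicit Defensive.
Import GRing.Theory.
Local Open Scope ring_scope.

Inductive zexp := ZAtom of nat | ZAdd of zexp & zexp | ZOpp of zexp | ZZero.

Fixpoint zeval (V : zmodType) (env : seq V) (e : zexp) : V :=
  match e with
  | ZAtom i => nth 0 env i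
  | ZAdd a b => zeval env a + zeval env b
  | ZOpp a => - zeval env a
  | ZZero => 0
  end.

Fixpoint zcoeff (i : nat) (e : zexp) : int :=
  match e with
  | ZAtom j => if i == j then 1 else 0
  | ZAdd a b => zcoeff i a + zcoeff i b
  | ZOpp a => - zcoeff i a
  | ZZero => 0
  end.

Lemma zevalE (V : zmodType) (env : seq V) e :
  zeval env e = \sum_(i < size env) env`_i *~ zcoeff i e.
Proof.
elim: e => [j|a IHa b IHb|a IHa|] /=.
- case: (ltnP j (size env)) => H.
  + rewrite (bigD1 (Ordinal H)) //= eqxx mulr1z big1 ?addr0 // => i Hi.
    have -> : (i == j :> nat) = false.
      by apply/negbTE; apply: contra Hi => /eqP E; apply/eqP/val_inj.
    by rewrite mulr0z.
  + rewrite nth_default // big1 // => i _.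
    have -> : (i == j :> nat) = false.
      by apply/negbTE; apply/eqP => E; move: (ltn_ord i); rewrite E ltnNge H.
    by rewrite mulr0z.
- by rewrite IHa IHb -big_split /=; apply: eq_bigr => i _; rewrite mulrzDr.
- by rewrite IHa -sumrN; apply: eq_bigr => i _; rewrite mulrNz.
- by rewrite big1 // => i _; rewrite mulr0z.
Qed.

Lemma zcheck (V : zmodType) (env : seq V) e1 e2 :
  all (fun i => zcoeff i e1 == zcoeff i e2) (iota 0 (size env)) ->
  zeval env e1 = zeval env e2.
Proof.
move=> /allP H; rewrite !zevalE; apply: eq_bigr => i _.
have /eqP -> // : zcoeff i e1 == zcoeff i e2.
by apply: H; rewrite mem_iota /= add0n ltn_ord.
Qed.

Ltac zcollect e acc :=
  lazymatch e with
  | (?a + ?b)%R => let acc' := zcollect a acc in zcollect b acc'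
  | (- ?a)%R => zcollect a acc
  | 0%R => acc
  | ?x => lazymatch acc with
          | context [x] => acc
          | _ => constr:(x :: acc)
          end
  end.

Ltac zidx x l :=
  lazymatch l with
  | x :: _ => constr:(O)
  | _ :: ?l' => let n := zidx x l' in constr:(S n)
  end.

Ltac zreify e l :=
  lazymatch e with
  | (?a + ?b)%R => let ra := zreify a l in let rb := zreify b l in constr:(ZAdd ra rb)
  | (- ?a)%R => let ra := zreify a l in constr:(ZOpp ra)
  | 0%R => constr:(ZZero)
  | ?x => let n := zidx x l in constr:(ZAtom n)
  end.

Ltac zmod_eq :=
  match goal with
  | |- @eq ?T ?l ?r =>
    let env0 := zcollect l (@nil T) in
    let env := zcollect r env0 in
    let e1 := zreify l env in
    let e2 := zreify r env in
    change (zeval env e1 = zeval env e2);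
    apply: zcheck; vm_compute; reflexivity
  end.

Lemma zmod_id9 (V : zmodType) (t1 t2 t3 u1 u2 u3 v w x : V) :
  t1 + (t2 + (-u1 + (-v + w))) + (t3 + (-u2 + (-u3 + v))) =
  t1 + (t2 + (t3 + (-x + (-u3 + w))) + (-u1 + (-u2 + x))).
Proof. zmod_eq. Qed.

Lemma zmod_test (k : comPzRingType) (V : lmodType k) (t1 t2 : V) :
  t1 - t2 + t2 = t1.
Proof. zmod_eq. Qed.

End MZ.
Import MZ.

Module MP5.
Set Implicit Arguments.
Unset Strict Implicit.
Unset Printing Implicit Defensive.
Import GRing.Theory.
Local Open Scope ring_scope.

Section Assoc2.
Variable (k A : comPzRingType).
Notation Sh := (Sha k A).
Notation EQ := (@EQF k (nw A)).
Notation dw := (dia_word k).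
Notation L := (@Defs.prefix k A).
Notation D := (delta k).

Lemma negc_cat T (X Y : fcomb k T) : negc (X ++ Y) = negc X ++ negc Y.
Proof. by rewrite /negc /scalec map_cat. Qed.

Lemma negc_negc T (X : fcomb k T) : EQF (negc (negc X)) X.
Proof. by move=> M g; rewrite !feval_negc opprK. Qed.

Lemma LLL (a b c : A) X Y Z :
  assocF X (Pr Y) (Pr Z) -> assocF (Pr X) Y (Pr Z) -> assocF (Pr X) (Pr Y) Z ->
  assocF X Y (Pr Z) -> assocF X Y Z -> assocF X (Pr Y) Z -> assocF (Pr X) Y Z ->
  assocF (L a X) (L b Y) (L c Z).
Proof.
move=> h1 h2 h3 h4 h5 h6 h7; rewrite /assocF in h1 h2 h3 h4 h5 h6 h7 *.
rewrite diaD4 diaD4 (diaD4 b c Y Z) diaD4 mulrA.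
apply: prefix_Proper.
rewrite -(Nij X Y) -(Nij Y Z).
rewrite !dia_catl !dia_catr !dia_negl !dia_negr !Pr_cat !Pr_neg.
rewrite (Nij (dia X Y) Z) (Nij X (dia Y Z)).
rewrite !Pr_cat !Pr_neg !negc_cat !negc_negc.
rewrite h1 h2 h3 h4 h5 h6 h7.
move=> M g; rewrite !feval_cat !feval_negc.
zmod_eq.
Qed.

Lemma single_nil (a : A) : [:: (1, (a, [::]))] = D a :> Sh.
Proof. by []. Qed.
Lemma single_cons (a x : A) s : [:: (1, (a, x :: s))] = L a [:: (1, (x, s))] :> Sh.
Proof. by []. Qed.

Lemma assoc_words n : forall (u v w : nw A),
  (size u.2 + size v.2 + size w.2 < n)%N -> @assocF k A [:: (1,u)] [:: (1,v)] [:: (1,w)].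
Proof.
elim: n => // n IH [a s] [b t] [c r] /= H.
have AS : forall i j l X Y Z, bnd i X -> bnd j Y -> bnd l Z -> (i+j+l < n)%N ->
    @assocF k A X Y Z.
  move=> i j l X Y Z /allP bX /allP bY /allP bZ Hn; apply: assoc_lift => p q r0 Hp Hq Hr.
  apply: IH; move: (bX _ Hp) (bY _ Hq) (bZ _ Hr) => /= h1 h2 h3; lia.
rewrite /assocF.
case: s H => [|x s] H; case: t H => [|y t] H; case: r H => [|z r] H;
  rewrite ?single_nil ?single_cons.
- by rewrite (diaD1 a b) (diaD1 (a*b) c) (diaD1 b c) (diaD1 a (b*c)) mulrA.
- by rewrite (diaD1 a b) (diaD2 (a*b) c) (diaD2 b c) (diaD2 a (b*c)) mulrA.
- by rewrite (diaD2 a b) (diaD3 (a*b) c) (diaD3 b c) (diaD2 a (b*c)) mulrA.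
- by rewrite (diaD2 a b) (diaD4 (a*b) c) (diaD4 b c) (diaD2 a (b*c)) mulrA.
- by rewrite (diaD3 a b) (diaD3 (a*b) c) (diaD1 b c) (diaD3 a (b*c)) mulrA.
- by rewrite (diaD3 a b) (diaD4 (a*b) c) (diaD2 b c) (diaD4 a (b*c)) mulrA.
- by rewrite (diaD4 a b) (diaD3 (a*b) c) (diaD3 b c) (diaD4 a (b*c)) mulrA.
- rewrite /= in H.
  refine (@LLL a b c [:: (1,(x,s))] [:: (1,(y,t))] [:: (1,(z,r))] _ _ _ _ _ _ _); (apply: AS; [apply: bnd_single || (apply: bnd_Pr; apply: bnd_single)
                          | apply: bnd_single || (apply: bnd_Pr; apply: bnd_single)
                          | apply: bnd_single || (apply: bnd_Pr; apply: bnd_single) |]);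
  rewrite /=; lia.
Qed.

Lemma dia_assoc (X Y Z : Sh) : EQ (dia (dia X Y) Z) (dia X (dia Y Z)).
Proof.
apply: assoc_lift => p q r _ _ _.
exact: (@assoc_words (size p.2.2 + size q.2.2 + size r.2.2).+1).
Qed.

End Assoc2.

End MP5.
Import MP5.

Module MP6.
Set Implicit Arguments.
Unset Strict Implicit.
Unset Printing Implicit Defensive.
Import GRing.Theory.
Local Open Scope ring_scope.

Local Arguments diaw : simpl never.

Section ML.
Variables (k A : comPzRingType) (iota : {rmorphism k -> A}).
Notation Sh := (Sha k A).
Notation EQ := (@EQF k (nw A)).
Notation dw := (dia_word k).
Notation L := (@Defs.prefix k A).
Notation D := (delta k).

Definition ML1 (M : lmodType k) (g : nw A -> M) :=
  (forall s, lin1 iota (fun a => g (a, s))) /\ (forall a0, multilin iota (fun s => g (a0, s))).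

Definition mkw (s : seq A) : nw A := (head 1 s, behead s).

Lemma ML1_mkw (M : lmodType k) (g : nw A -> M) : ML1 g -> multilin iota (fun s => g (mkw s)).
Proof.
case=> H1 H2 [|u0 u] v c a b /=; first exact: H1.
exact: H2.
Qed.

Lemma ML1_wd (M : lmodType k) (f : seq A -> M) : multilin iota f -> ML1 (fun w => f (wd w)).
Proof.
move=> H; split=> [s c a b|a0 u v c a b] /=; first exact: (H [::]).
exact: (H (a0 :: u)).
Qed.

Lemma ML1_ext (M : lmodType k) (g g' : nw A -> M) : (forall w, g w = g' w) -> ML1 g -> ML1 g'.
Proof.
move=> E [H1 H2]; split=> [s c a b|a0 u v c a b] /=; rewrite -!E; [exact: H1|exact: H2].
Qed.

Lemma ML1_prefix (M : lmodType k) (g : nw A -> M) a : ML1 g -> ML1 (fun w => g (a, wd w)).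
Proof.
case=> H1 H2; split=> [s c x y|a0 u v c x y] /=; first exact: (H2 a [::]).
exact: (H2 a (a0 :: u)).
Qed.

Lemma ML1_0 (M : lmodType k) : ML1 (fun _ : nw A => (0 : M)).
Proof. split=> [s c a b|a0 u v c a b] /=; by rewrite scaler0 addr0. Qed.

Lemma ML1_add (M : lmodType k) (g1 g2 : nw A -> M) : ML1 g1 -> ML1 g2 -> ML1 (fun w => g1 w + g2 w).
Proof.
case=> H1 H2 [G1 G2]; split=> [s c a b|a0 u v c a b].
- by rewrite H1 G1 scalerDr addrACA.
- by rewrite H2 G2 scalerDr addrACA.
Qed.

Lemma ML1_scale (M : lmodType k) c0 (g : nw A -> M) : ML1 g -> ML1 (fun w => c0 *: g w).
Proof.
case=> H1 H2; split=> [s c a b|a0 u v c a b].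
- by rewrite H1 scalerDr !scalerA mulrC.
- by rewrite H2 scalerDr !scalerA mulrC.
Qed.

Lemma ML1_opp (M : lmodType k) (g : nw A -> M) : ML1 g -> ML1 (fun w => - g w).
Proof.
move=> H; apply: (ML1_ext _ (ML1_scale (-1) H)) => w; by rewrite scaleN1r.
Qed.

Lemma ML1_feval T (M : lmodType k) (h : nw A -> T -> M) (Y : fcomb k T) :
  (forall t, ML1 (fun w => h w t)) -> ML1 (fun w => feval (h w) Y).
Proof.
elim: Y => [|p Y IH] H.
  by apply: (ML1_ext _ (@ML1_0 M)) => w; rewrite feval_nil.
apply: (ML1_ext _ (ML1_add (ML1_scale p.1 (H p.2)) (IH H))) => w.
by rewrite feval_cons.
Qed.

Lemma multilin_ext_ne (M : lmodType k) (f f' : seq A -> M) :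
  (forall x s, f (x :: s) = f' (x :: s)) -> multilin iota f' -> multilin iota f.
Proof.
move=> E H u v c a b.
have E' : forall y, f (u ++ y :: v) = f' (u ++ y :: v).
  by case: u => [|u0 u] y /=; rewrite E.
by rewrite !E' H.
Qed.

Lemma diaw_head n (a1 : A) a' (b1 : A) b' :
  diaw k n.+1 a1 a' b1 b' = [seq (p.1, (a1 * b1, p.2.2)) | p <- diaw k n.+1 1 a' 1 b'].
Proof.
case: a' => [|a2 a'']; case: b' => [|b2 b''] //=.
by rewrite /Defs.prefix -map_comp.
Qed.

Lemma feval_maphead (M : lmodType k) (g : nw A -> M) (c : A) (X : Sh) :
  feval g [seq (p.1, (c, p.2.2)) | p <- X] = feval (fun w => g (c, w.2)) X.
Proof. by rewrite /feval big_map. Qed.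

Lemma diaw_ML n : forall (M : lmodType k) (g : nw A -> M) (b1 : A) b',
  ML1 g -> ML1 (fun u => feval g (diaw k n u.1 u.2 b1 b')).
Proof.
elim: n => [|n IH] M g b1 b' Hg.
  by apply: (ML1_ext _ (@ML1_0 M)) => w; rewrite /diaw feval_nil.
case: (Hg) => Hg1 Hg2; split.
- move=> s c a b /=.
  rewrite (diaw_head n (iota c * a + b)) (diaw_head n a) (diaw_head n b) !feval_maphead.
  rewrite -feval_scale -feval_add; apply: feval_ext => w.
  by rewrite mulrDl -mulrA Hg1.
- move=> a0; rewrite /=.
  case: b' => [|b2 b''].
    apply: (multilin_ext_ne (f' := fun s => g (a0 * b1, s))); last exact: Hg2.
    by move=> x s; rewrite diaw_head feval_maphead /diaw /= feval_single.
  set g'' := fun w : nw A => g (a0 * b1, wd w).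
  have Hg'' : ML1 g'' by apply: ML1_prefix.
  pose F := fun w : nw A => feval g'' (diaw k n w.1 w.2 1 (b2 :: b''))
      + feval g'' (diaw k n 1 (wd w) b2 b'')
      - feval (fun w' => g'' (1, wd w')) (diaw k n w.1 w.2 b2 b'').
  apply: (multilin_ext_ne (f' := fun s => F (mkw s))).
    move=> x s; rewrite diaw_head feval_maphead.
    have -> : diaw k n.+1 1 (x :: s) 1 (b2 :: b'') = L (1 * 1)
      (diaw k n x s 1 (b2 :: b'') ++ diaw k n 1 (x :: s) b2 b'' ++
       negc (L 1 (diaw k n x s b2 b''))) by [].
    rewrite feval_prefix !feval_cat feval_negc feval_prefix addrA.
    by [].
  apply: ML1_mkw; rewrite /F.
  apply: ML1_add; first apply: ML1_add.
  + exact: IH.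
  + exact: (ML1_prefix (g := fun u => feval g'' (diaw k n u.1 u.2 b2 b'')) 1 (IH _ _ _ _ Hg'')).
  + by apply: ML1_opp; apply: IH; apply: ML1_prefix.
Qed.

End ML.

End MP6.
Import MP6.

Module MP7.
Set Implicit Arguments.
Unset Strict Implicit.
Unset Printing Implicit Defensive.
Import GRing.Theory.
Local Open Scope ring_scope.

Section EQ1.
Variables (k A : comPzRingType) (iota : {rmorphism k -> A}).
Notation Sh := (Sha k A).
Notation EQ := (@EQF k (nw A)).
Notation dw := (dia_word k).
Notation L := (@Defs.prefix k A).
Notation D := (delta k).
Notation ML1 := (ML1 iota).

Lemma dw_ML (M : lmodType k) (g : nw A -> M) v : ML1 g -> ML1 (fun u => feval g (dw u v)).
Proof.
move=> Hg; case: (diaw_ML 0 v.1 v.2 Hg) => _ _.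
have H n := diaw_ML n v.1 v.2 Hg.
split=> [s c a b|a0 u w c a b]; rewrite /dia_word /=.
- by case: (H (size s + size v.2).+1) => H1 _; apply: H1.
- rewrite !size_cat /=.
  by case: (H (size u + (size w).+1 + size v.2).+1) => _ H2; apply: (H2 a0).
Qed.

Lemma dw_MLr (M : lmodType k) (g : nw A -> M) u : ML1 g -> ML1 (fun v => feval g (dw u v)).
Proof.
move=> Hg; apply: (ML1_ext _ (dw_ML u Hg)) => v; by rewrite dw_comm.
Qed.

Definition EQ1 (x y : Sh) := forall (M : lmodType k) (g : nw A -> M), ML1 g -> feval g x = feval g y.

#[export] Instance EQ1_equiv : Equivalence EQ1.
Proof.
split; first by move=> x M g.
- by move=> x y H M g Hg; rewrite H.
- by move=> x y z H1 H2 M g Hg; rewrite H1 // H2.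
Qed.

Lemma EQF_EQ1 x y : EQ x y -> EQ1 x y.
Proof. by move=> H M g _; apply: H. Qed.

#[export] Instance EQF_EQ1_sub : subrelation EQ EQ1.
Proof. exact: EQF_EQ1. Qed.

#[export] Instance dia_Proper1 : Proper (EQ1 ==> EQ1 ==> EQ1) (@dia k A).
Proof.
move=> x x' Hx y y' Hy M g Hg; rewrite !feval_dia Hx; last first.
  by apply: ML1_feval => v; apply: dw_ML.
apply: feval_ext => u; apply: Hy; exact: dw_MLr.
Qed.

#[export] Instance prefix_Proper1 a : Proper (EQ1 ==> EQ1) (L a).
Proof. by move=> x x' Hx M g Hg; rewrite !feval_prefix Hx //; apply: ML1_prefix. Qed.

#[export] Instance Pr_Proper1 : Proper (EQ1 ==> EQ1) (@Pr k A).
Proof. by move=> x x' Hx M g Hg; rewrite !feval_Pr Hx //; apply: ML1_prefix. Qed.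

#[export] Instance cat_Proper1 : Proper (EQ1 ==> EQ1 ==> EQ1) (@cat _ : Sh -> Sh -> Sh).
Proof. by move=> x x' Hx y y' Hy M g Hg; rewrite !feval_cat Hx // Hy. Qed.

#[export] Instance negc_Proper1 : Proper (EQ1 ==> EQ1) (@negc k (nw A)).
Proof. by move=> x x' Hx M g Hg; rewrite !feval_negc Hx. Qed.

#[export] Instance scalec_Proper1 c : Proper (EQ1 ==> EQ1) (@scalec k (nw A) c).
Proof. by move=> x x' Hx M g Hg; rewrite !feval_scalec Hx. Qed.

Lemma mkw_wd (w : nw A) : mkw (wd w) = w.
Proof. by case: w. Qed.

Lemma eqSh_EQ1 x y : eqSh iota x y <-> EQ1 x y.
Proof.
split=> H M g.
- move=> Hg.
  have E z : feval (fun w => g (mkw (wd w))) z = feval g z.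
    by apply: feval_ext => w; rewrite mkw_wd.
  by rewrite -!E; apply: (H M (fun s => g (mkw s))); apply: ML1_mkw.
- by move=> Hf; apply: H; apply: ML1_wd.
Qed.

Lemma dia_unit c (X : Sh) : EQ (dia (muT A c) X) (scalec c X).
Proof.
move=> M g; rewrite feval_dia feval_scalec /muT feval_cons feval_nil addr0.
congr (_ *: _); apply: feval_ext => [[a [|x s]]] /=; by rewrite feval_single mul1r.
Qed.

End EQ1.

End MP7.
Import MP7.

Module MP8.
Set Implicit Arguments.
Unset Strict Implicit.
Unset Printing Implicit Defensive.
Import GRing.Theory.
Local Open Scope ring_scope.

Section Sha2.
Variables (k A : comPzRingType) (iota : {rmorphism k -> A}).
Notation Sh := (Sha k A).
Notation Sh2 := (Sha2 k A).
Notation EQ := (@EQF k (nw A)).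
Notation EQF2 := (@EQF k (nw A * nw A)).
Notation dw := (dia_word k).
Notation L := (@Defs.prefix k A).
Notation D := (delta k).
Notation ML1 := (ML1 iota).

Definition ML2 (M : lmodType k) (G : nw A * nw A -> M) :=
  (forall v, ML1 (fun u => G (u, v))) /\ (forall u, ML1 (fun v => G (u, v))).

Definition EQ2 (x y : Sh2) := forall (M : lmodType k) (G : nw A * nw A -> M),
  ML2 G -> feval G x = feval G y.

#[export] Instance EQ2_equiv : Equivalence EQ2.
Proof.
split; first by move=> x M g.
- by move=> x y H M g Hg; rewrite H.
- by move=> x y z H1 H2 M g Hg; rewrite H1 // H2.
Qed.

#[export] Instance EQF_EQ2_sub : subrelation EQF2 EQ2.
Proof. by move=> x y H M G _; apply: H. Qed.

Lemma eqSh2_EQ2 x y : eqSh2 iota x y <-> EQ2 x y.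
Proof.
split=> H M G.
- move=> [H1 H2].
  have E z : feval (fun p => G (mkw (wd p.1), mkw (wd p.2))) z = feval G z.
    by apply: feval_ext => p; rewrite !mkw_wd -surjective_pairing.
  rewrite -!E; apply: (H M (fun u v => G (mkw u, mkw v))).
  + by move=> v; apply: (ML1_mkw (g := fun u => G (u, mkw v))).
  + by move=> u; apply: (ML1_mkw (g := fun v => G (mkw u, v))).
- move=> Hf1 Hf2; apply: (H M (fun p => G (wd p.1) (wd p.2))); split.
  + by move=> v; apply: (ML1_wd (f := fun u => G u (wd v))).
  + by move=> u; apply: (ML1_wd (f := fun v => G (wd u) v)).
Qed.

Lemma ML2_ext (M : lmodType k) (G G' : nw A * nw A -> M) :
  (forall p, G p = G' p) -> ML2 G -> ML2 G'.
Proof.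
move=> E [H1 H2]; split=> v.
- by apply: (ML1_ext _ (H1 v)) => u; rewrite E.
- by apply: (ML1_ext _ (H2 v)) => u; rewrite E.
Qed.

Lemma ML2_feval T (M : lmodType k) (H : nw A * nw A -> T -> M) (Y : fcomb k T) :
  (forall t, ML2 (fun p => H p t)) -> ML2 (fun p => feval (H p) Y).
Proof.
move=> HH; split=> v.
- by apply: (ML1_feval (h := fun u t => H (u, v) t)) => t; case: (HH t).
- by apply: (ML1_feval (h := fun u t => H (v, u) t)) => t; case: (HH t).
Qed.

Definition Phi (M : lmodType k) (G : nw A * nw A -> M) (p q : nw A * nw A) :=
  feval (fun r => feval (fun s => G (r, s)) (dw p.2 q.2)) (dw p.1 q.1).

Lemma feval_bul (M : lmodType k) (G : nw A * nw A -> M) (X Y : Sh2) :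
  feval G (bul X Y) = feval (fun p => feval (fun q => Phi G p q) Y) X.
Proof.
rewrite /bul feval_flatten big_flatten /= big_map /feval; apply: eq_bigr => p _.
rewrite big_map scaler_sumr; apply: eq_bigr => q _.
rewrite -/(feval _ _) feval_flatten big_map /Phi /feval scalerA scaler_sumr.
apply: eq_bigr => r _; rewrite big_map scaler_sumr scaler_sumr.
by apply: eq_bigr => s _ /=; rewrite !scalerA; congr (_ *: _); rewrite !mulrA.
Qed.

Lemma feval_idPr (M : lmodType k) (G : nw A * nw A -> M) (X : Sh2) :
  feval G (idPr X) = feval (fun p => G (p.1, (1, wd p.2))) X.
Proof. by rewrite /feval big_map. Qed.

Lemma feval_liftAA (M : lmodType k) (G : nw A * nw A -> M) (X : fcomb k (A * A)) :
  feval G (liftAA X) = feval (fun p => G ((p.1, [::]), (p.2, [::]))) X.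
Proof. by rewrite /feval big_map. Qed.

Lemma ML2_Phi_l (M : lmodType k) (G : nw A * nw A -> M) q :
  ML2 G -> ML2 (fun p => Phi G p q).
Proof.
case=> H1 H2; split=> v.
- rewrite /Phi /=; apply: (dw_ML (g := fun r => feval (fun s => G (r, s)) (dw v q.2))).
  by apply: ML1_feval.
- rewrite /Phi /=; apply: (ML1_feval (h := fun u r => feval (fun s => G (r, s)) (dw u q.2))) => r.
  exact: dw_ML.
Qed.

Lemma ML2_Phi_r (M : lmodType k) (G : nw A * nw A -> M) p :
  ML2 G -> ML2 (fun q => Phi G p q).
Proof.
case=> H1 H2; split=> v.
- rewrite /Phi /=; apply: (dw_MLr (g := fun r => feval (fun s => G (r, s)) (dw p.2 v))).
  by apply: ML1_feval.
- rewrite /Phi /=; apply: (ML1_feval (h := fun u r => feval (fun s => G (r, s)) (dw p.2 u))) => r.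
  exact: dw_MLr.
Qed.

#[export] Instance bul_Proper2 : Proper (EQ2 ==> EQ2 ==> EQ2) (@bul k A).
Proof.
move=> x x' Hx y y' Hy M G HG; rewrite !feval_bul Hx; last first.
  by apply: ML2_feval => q; apply: ML2_Phi_l.
apply: feval_ext => p; apply: Hy; exact: ML2_Phi_r.
Qed.

#[export] Instance bul_ProperF : Proper (EQF2 ==> EQF2 ==> EQF2) (@bul k A).
Proof.
move=> x x' Hx y y' Hy M G; rewrite !feval_bul Hx.
by apply: feval_ext => p; apply: Hy.
Qed.

#[export] Instance idPr_Proper2 : Proper (EQ2 ==> EQ2) (@idPr k A).
Proof.
move=> x x' Hx M G [H1 H2]; rewrite !feval_idPr Hx //; split=> v.
- exact: (H1 (1, wd v)).
- exact: (ML1_prefix (g := fun w => G (v, w)) 1 (H2 v)).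
Qed.

#[export] Instance idPr_ProperF : Proper (EQF2 ==> EQF2) (@idPr k A).
Proof. by move=> x x' Hx M G; rewrite !feval_idPr Hx. Qed.

#[export] Instance cat_Proper2 : Proper (EQ2 ==> EQ2 ==> EQ2) (@cat _ : Sh2 -> Sh2 -> Sh2).
Proof. by move=> x x' Hx y y' Hy M g Hg; rewrite !feval_cat Hx // Hy. Qed.

#[export] Instance negc_Proper2 : Proper (EQ2 ==> EQ2) (@negc k (nw A * nw A)).
Proof. by move=> x x' Hx M g Hg; rewrite !feval_negc Hx. Qed.

#[export] Instance scalec_Proper2 c : Proper (EQ2 ==> EQ2) (@scalec k (nw A * nw A) c).
Proof. by move=> x x' Hx M g Hg; rewrite !feval_scalec Hx. Qed.

Lemma Phi_comm (M : lmodType k) (G : nw A * nw A -> M) p q : Phi G p q = Phi G q p.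
Proof.
rewrite /Phi dw_comm; apply: feval_ext => r; by rewrite dw_comm.
Qed.

Lemma bul_comm (X Y : Sh2) : EQF2 (bul X Y) (bul Y X).
Proof.
move=> M G; rewrite !feval_bul feval_swap.
by apply: feval_ext => q; apply: feval_ext => p; rewrite Phi_comm.
Qed.

Lemma dw_unit (M : lmodType k) (g : nw A -> M) v : feval g (dw (1, [::]) v) = g v.
Proof. by case: v => [a [|x s]] /=; rewrite feval_single mul1r. Qed.

Lemma bul_unit (Y : Sh2) : EQF2 (bul (unit2 k A) Y) Y.
Proof.
move=> M G; rewrite feval_bul /unit2 feval_single.
by apply: feval_ext => q; rewrite /Phi /= dw_unit dw_unit -surjective_pairing.
Qed.

Lemma bul_catl (X1 X2 Y : Sh2) : EQF2 (bul (X1 ++ X2) Y) (bul X1 Y ++ bul X2 Y).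
Proof. by move=> M G; rewrite feval_cat !feval_bul feval_cat. Qed.

Lemma bul_catr (X Y1 Y2 : Sh2) : EQF2 (bul X (Y1 ++ Y2)) (bul X Y1 ++ bul X Y2).
Proof. by move=> M G; rewrite feval_cat !feval_bul -feval_add; apply: feval_ext => p; rewrite feval_cat. Qed.

Lemma bul_negl (X Y : Sh2) : EQF2 (bul (negc X) Y) (negc (bul X Y)).
Proof. by move=> M G; rewrite feval_negc !feval_bul feval_negc. Qed.

Lemma bul_negr (X Y : Sh2) : EQF2 (bul X (negc Y)) (negc (bul X Y)).
Proof. by move=> M G; rewrite feval_negc !feval_bul -feval_opp; apply: feval_ext => p; rewrite feval_negc. Qed.

Lemma wassoc_all (u v w : nw A) : wassoc k u v w.
Proof.
apply: assocF_w.
exact: (@assoc_words k A (size u.2 + size v.2 + size w.2).+1 u v w (ltnSn _)).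
Qed.

Lemma bul_assoc (X Y Z : Sh2) : EQF2 (bul (bul X Y) Z) (bul X (bul Y Z)).
Proof.
move=> M G; rewrite !feval_bul.
rewrite [in RHS](feval_ext _ (g' := fun x => feval (fun y => feval (fun z =>
   feval (fun s1 => feval (fun s2 => Phi G x (s1, s2)) (dw y.2 z.2)) (dw y.1 z.1)) Z) Y)); last first.
  by move=> x; rewrite feval_bul.
apply: feval_ext => x; apply: feval_ext => y.
rewrite /Phi.
under feval_ext => t1 do rewrite feval_swap.
rewrite feval_swap; apply: feval_ext => z /=.
under feval_ext => t1 do rewrite feval_swap.
under feval_ext => t1 do under feval_ext => a do
  rewrite (wassoc_all x.2 y.2 z.2 (fun s => G (a, s))).
rewrite (wassoc_all x.1 y.1 z.1
  (fun a => feval (fun s2 => feval (fun b => G (a, b)) (dw x.2 s2)) (dw y.2 z.2))).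
apply: feval_ext => s1; exact: feval_swap.
Qed.

End Sha2.

End MP8.
Import MP8.

Module MP9.
Set Implicit Arguments.
Unset Strict Implicit.
Unset Printing Implicit Defensive.
Import GRing.Theory.
Local Open Scope ring_scope.

Section Sha2b.
Variables (k A : comPzRingType) (iota : {rmorphism k -> A}).
Notation Sh := (Sha k A).
Notation Sh2 := (Sha2 k A).
Notation EQ := (@EQF k (nw A)).
Notation EQF2 := (@EQF k (nw A * nw A)).
Notation dw := (dia_word k).
Notation L := (@Defs.prefix k A).
Notation D := (delta k).
Notation ML1 := (ML1 iota).
Notation ML2 := (ML2 iota).
Notation EQ2 := (EQ2 iota).

Lemma idPr_Nij (X Y : Sh2) : EQF2 (bul (idPr X) (idPr Y))
  (idPr (bul (idPr X) Y ++ bul X (idPr Y) ++ negc (idPr (bul X Y)))).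
Proof.
move=> M G; rewrite feval_bul feval_idPr feval_idPr !feval_cat feval_negc.
rewrite (feval_idPr _ (bul X Y)) !feval_bul (feval_idPr _ X).
rewrite -feval_opp -!feval_add; apply: feval_ext => x.
rewrite !feval_idPr -feval_opp -!feval_add; apply: feval_ext => y.
rewrite /Phi /= -feval_opp -!feval_add; apply: feval_ext => r.
rewrite (@dwLL k A 1 1) feval_prefix !feval_cat feval_negc feval_Pr mulr1.
by rewrite addrA (addrC (feval _ (dw x.2 _))) -addrA.
Qed.

Lemma liftAA_eq (x y : fcomb k (A * A)) : eqAA iota x y -> EQ2 (liftAA x) (liftAA y).
Proof.
move=> H M G [H1 H2]; rewrite !feval_liftAA.
apply: (H M (fun a b => G ((a, [::]), (b, [::])))).
- by move=> b c a a'; case: (H1 (b, [::])) => /= L1 _; apply: L1.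
- by move=> a c b b'; case: (H2 (a, [::])) => /= L1 _; apply: L1.
Qed.

Lemma liftAA_mul (X Y : fcomb k (A * A)) :
  EQF2 (liftAA (mulAA X Y)) (bul (liftAA X) (liftAA Y)).
Proof.
move=> M G; rewrite feval_liftAA feval_bul feval_liftAA /mulAA feval_flatten big_map.
rewrite /feval; apply: eq_bigr => p _.
rewrite -/(feval _ _) feval_liftAA /feval big_map scaler_sumr; apply: eq_bigr => q _.
by rewrite /Phi /= !feval_single scalerA.
Qed.

End Sha2b.

End MP9.
Import MP9.

Module MP10.
Set Implicit Arguments.
Unset Strict Implicit.
Unset Printing Implicit Defensive.
Import GRing.Theory.
Local Open Scope ring_scope.

Section DT.
Variables (k A : comPzRingType) (iota : {rmorphism k -> A}).
Variable DA : A -> fcomb k (A * A).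
Hypothesis DA_lin : forall c a b, eqAA iota (DA (iota c * a + b)) (scalec c (DA a) ++ DA b).
Hypothesis DA_1 : eqAA iota (DA 1) [:: (1, (1, 1))].
Notation Sh := (Sha k A).
Notation Sh2 := (Sha2 k A).
Notation EQ := (@EQF k (nw A)).
Notation EQF2 := (@EQF k (nw A * nw A)).
Notation dw := (dia_word k).
Notation L := (@Defs.prefix k A).
Notation D := (delta k).
Notation ML1 := (ML1 iota).
Notation ML2 := (ML2 iota).
Notation EQ2 := (EQ2 iota).
Notation EQ1 := (EQ1 iota).

Lemma feval_DT (M : lmodType k) (G : nw A * nw A -> M) (X : Sh) :
  feval G (DT DA X) = feval (fun w => feval G (DTl DA w.1 w.2)) X.
Proof. by rewrite /DT (feval_lin G (fun w => DTl DA w.1 w.2)). Qed.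

Lemma ML2_idPr (M : lmodType k) (H : nw A * nw A -> M) :
  ML2 H -> ML2 (fun q => H (q.1, (1, wd q.2))).
Proof.
case=> H1 H2; split=> v.
- exact: (H1 (1, wd v)).
- exact: (ML1_prefix (g := fun w => H (v, w)) 1 (H2 v)).
Qed.

Lemma feval_bul_idPr (M : lmodType k) (G : nw A * nw A -> M) (Z W : Sh2) :
  feval G (bul Z (idPr W)) =
  feval (fun q => feval (fun p => Phi G p (q.1, (1, wd q.2))) Z) W.
Proof. by rewrite feval_bul feval_swap feval_idPr. Qed.

Lemma DTl_cons a x s : EQ2 (DTl DA a (x :: s)) (bul (liftAA (DA a)) (idPr (DTl DA x s))).
Proof.
rewrite /=; case: eqP => [->|_]; last reflexivity.
rewrite (liftAA_eq DA_1).
have -> : liftAA [:: (1, (1, 1))] = unit2 k A by [].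
by rewrite bul_unit.
Qed.

Lemma lin_liftDA (M : lmodType k) (H : nw A * nw A -> M) :
  ML2 H -> lin1 iota (fun a => feval H (liftAA (DA a))).
Proof.
move=> HH c a b /=.
rewrite (liftAA_eq (DA_lin c a b) HH) feval_liftAA feval_cat feval_scalec !feval_liftAA.
by [].
Qed.

Definition FD (M : lmodType k) (G : nw A * nw A -> M) (a : A) (s : seq A) :=
  feval G (DTl DA a s).

Lemma FD_lin1 (M : lmodType k) (G : nw A * nw A -> M) s :
  ML2 G -> lin1 iota (fun a => FD G a s).
Proof.
move=> HG; case: s => [|y s].
  exact: lin_liftDA.
move=> c a b; rewrite /FD /=.
rewrite !(DTl_cons _ _ _ HG) !feval_bul.
apply: (lin_liftDA (H := fun p => feval (fun q => Phi G p q) (idPr (DTl DA y s)))).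
by apply: ML2_feval => q; apply: ML2_Phi_l.
Qed.

Lemma FD_cons (M : lmodType k) (G : nw A * nw A -> M) a0 y s : ML2 G ->
  FD G a0 (y :: s) =
  FD (fun q => feval (fun p => Phi G p (q.1, (1, wd q.2))) (liftAA (DA a0))) y s.
Proof. by move=> HG; rewrite /FD (DTl_cons _ _ _ HG) feval_bul_idPr. Qed.

Lemma ML2_Gp (M : lmodType k) (G : nw A * nw A -> M) a0 : ML2 G ->
  ML2 (fun q => feval (fun p => Phi G p (q.1, (1, wd q.2))) (liftAA (DA a0))).
Proof.
move=> HG; apply: (ML2_feval (H := fun q p => Phi G p (q.1, (1, wd q.2)))) => p.
by apply: (ML2_idPr (H := fun q => Phi G p q)); apply: ML2_Phi_r.
Qed.

Lemma FD_tail n : forall (M : lmodType k) (G : nw A * nw A -> M), ML2 G ->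
  forall a0 u v c a b, (size u < n)%N ->
  FD G a0 (u ++ (iota c * a + b) :: v) = c *: FD G a0 (u ++ a :: v) + FD G a0 (u ++ b :: v).
Proof.
elim: n => // n IH M G HG a0 [|u0 u] v c a b Hn /=.
- rewrite !(FD_cons _ _ _ HG); apply: FD_lin1; exact: ML2_Gp.
- rewrite !(FD_cons _ _ _ HG); apply: IH => //; exact: ML2_Gp.
Qed.

Lemma FD_ML (M : lmodType k) (G : nw A * nw A -> M) :
  ML2 G -> ML1 (fun w => feval G (DTl DA w.1 w.2)).
Proof.
move=> HG; split=> [s|a0 u v c a b] /=.
- exact: (FD_lin1 s HG).
- exact: (FD_tail (n := (size u).+1) HG).
Qed.

#[export] Instance DT_Proper1 : Proper (EQ1 ==> EQ2) (DT DA).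
Proof. by move=> x y H M G HG; rewrite !feval_DT H //; apply: FD_ML. Qed.

#[export] Instance DT_ProperF : Proper (EQ ==> EQF2) (DT DA).
Proof. by move=> x y H M G; rewrite !feval_DT H. Qed.

Lemma DT_cat (X Y : Sh) : DT DA (X ++ Y) = DT DA X ++ DT DA Y.
Proof. by rewrite /DT map_cat flatten_cat. Qed.

Lemma DT_neg (X : Sh) : EQF2 (DT DA (negc X)) (negc (DT DA X)).
Proof. by move=> M G; rewrite feval_DT !feval_negc feval_DT. Qed.

Lemma DT_delta a : EQF2 (DT DA (D a)) (liftAA (DA a)).
Proof. by move=> M G; rewrite feval_DT feval_single. Qed.

Lemma DT_Pr (X : Sh) : EQF2 (DT DA (Pr X)) (idPr (DT DA X)).
Proof.
move=> M G; rewrite feval_DT feval_Pr feval_idPr feval_DT.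
by apply: feval_ext => w; rewrite /= eqxx feval_idPr.
Qed.

Lemma DT_L a (X : Sh) : EQ2 (DT DA (L a X)) (bul (liftAA (DA a)) (idPr (DT DA X))).
Proof.
move=> M G HG; rewrite feval_DT feval_prefix feval_bul_idPr feval_DT.
apply: feval_ext => w; rewrite /wd /=.
by rewrite -/(wd w) (DTl_cons _ _ _ HG) feval_bul_idPr.
Qed.

End DT.

End MP10.
Import MP10.

Module MP11.
Set Implicit Arguments.
Unset Strict Implicit.
Unset Printing Implicit Defensive.
Import GRing.Theory.
Local Open Scope ring_scope.

Section DThom.
Variables (k A : comPzRingType) (iota : {rmorphism k -> A}).
Variable DA : A -> fcomb k (A * A).
Hypothesis DA_lin : forall c a b, eqAA iota (DA (iota c * a + b)) (scalec c (DA a) ++ DA b).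
Hypothesis DA_1 : eqAA iota (DA 1) [:: (1, (1, 1))].
Hypothesis DA_mul : forall a b, eqAA iota (DA (a * b)) (mulAA (DA a) (DA b)).
Notation Sh := (Sha k A).
Notation Sh2 := (Sha2 k A).
Notation EQ := (@EQF k (nw A)).
Notation EQF2 := (@EQF k (nw A * nw A)).
Notation dw := (dia_word k).
Notation L := (@Defs.prefix k A).
Notation D := (delta k).
Notation ML1 := (ML1 iota).
Notation ML2 := (ML2 iota).
Notation EQ2 := (EQ2 iota).
Notation EQ1 := (EQ1 iota).
Notation DT := (DT DA).

Lemma F2 (x y : Sh2) : EQF2 x y -> EQ2 x y.
Proof. by move=> H M G _; apply: H. Qed.

Lemma lDA_mul a b : EQ2 (liftAA (DA (a * b))) (bul (liftAA (DA a)) (liftAA (DA b))).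
Proof. by rewrite (liftAA_eq (DA_mul a b)) (F2 (liftAA_mul _ _)). Qed.

Lemma cat_swap T (X Y Z : fcomb k T) : EQF (X ++ Y ++ Z) (Y ++ X ++ Z).
Proof. by move=> M g; rewrite !feval_cat addrCA. Qed.

Lemma bul_AC (a b c d : Sh2) : EQF2 (bul (bul a b) (bul c d)) (bul (bul a c) (bul b d)).
Proof.
rewrite bul_assoc (bul_comm c d) -(bul_assoc b d c) (bul_comm (bul b d) c).
by rewrite -bul_assoc.
Qed.

Lemma hom_DD a b : EQ2 (DT (dia (D a) (D b))) (bul (DT (D a)) (DT (D b))).
Proof.
rewrite (diaD1 a b) (F2 (DT_delta _ _)) (F2 (DT_delta _ _)) (F2 (DT_delta _ _)).
exact: lDA_mul.
Qed.

Lemma hom_DL a b (Y : Sh) : EQ2 (DT (dia (D a) (L b Y))) (bul (DT (D a)) (DT (L b Y))).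
Proof.
rewrite (diaD2 a b Y) (DT_L DA_1) (DT_L DA_1) (F2 (DT_delta _ _)).
by rewrite lDA_mul (F2 (bul_assoc _ _ _)).
Qed.

Lemma hom_LD a b (X : Sh) : EQ2 (DT (dia (L a X) (D b))) (bul (DT (L a X)) (DT (D b))).
Proof.
rewrite (diaD3 a b X) (DT_L DA_1) (DT_L DA_1) (F2 (DT_delta _ _)).
rewrite lDA_mul (F2 (bul_assoc _ _ _)) (F2 (bul_comm (liftAA (DA b)) _)).
by rewrite (F2 (bul_assoc _ _ _)).
Qed.

Lemma hom_LL a b (X Y : Sh) :
  EQ2 (DT (dia X (Pr Y))) (bul (DT X) (DT (Pr Y))) ->
  EQ2 (DT (dia (Pr X) Y)) (bul (DT (Pr X)) (DT Y)) ->
  EQ2 (DT (dia X Y)) (bul (DT X) (DT Y)) ->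
  EQ2 (DT (dia (L a X) (L b Y))) (bul (DT (L a X)) (DT (L b Y))).
Proof.
move=> h1 h2 h3.
rewrite (diaD4 a b X Y) (DT_L DA_1) (DT_L DA_1) (DT_L DA_1).
rewrite !DT_cat (F2 (DT_neg _ _)) (F2 (DT_Pr _ _)) h1 h2 h3.
rewrite !(F2 (DT_Pr _ _)) (F2 (cat_swap _ _ _)) -(F2 (idPr_Nij _ _)).
by rewrite lDA_mul (F2 (bul_AC _ _ _ _)).
Qed.

Definition homF (X Y : Sh) := EQ2 (DT (dia X Y)) (bul (DT X) (DT Y)).

Lemma feval_DTdia (M : lmodType k) (G : nw A * nw A -> M) (X Y : Sh) :
  feval G (DT (dia X Y)) =
  feval (fun u => feval (fun v => feval G (DT (dia [:: (1, u)] [:: (1, v)]))) Y) X.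
Proof.
rewrite feval_DT feval_dia; apply: feval_ext => u; apply: feval_ext => v.
by rewrite feval_DT feval_dia !feval_single.
Qed.

Lemma feval_bulDT (M : lmodType k) (G : nw A * nw A -> M) (X Y : Sh) :
  feval G (bul (DT X) (DT Y)) =
  feval (fun u => feval (fun v => feval G (bul (DT [:: (1, u)]) (DT [:: (1, v)]))) Y) X.
Proof.
rewrite feval_bul (feval_DT DA _ X); apply: feval_ext => u.
rewrite feval_swap (feval_DT DA _ Y); apply: feval_ext => v.
rewrite feval_bul (feval_DT DA _ [:: (1, u)]) feval_single feval_swap.
by apply: feval_ext => p; rewrite feval_DT feval_single.
Qed.

Lemma hom_lift (X Y : Sh) :
  (forall p q, p \in X -> q \in Y -> homF [:: (1, p.2)] [:: (1, q.2)]) -> homF X Y.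
Proof.
move=> H M G HG; rewrite feval_DTdia feval_bulDT.
apply: feval_ext_in => p Hp; apply: feval_ext_in => q Hq.
exact: (H p q Hp Hq).
Qed.

Lemma hom_words n : forall (u v : nw A),
  (size u.2 + size v.2 < n)%N -> homF [:: (1, u)] [:: (1, v)].
Proof.
elim: n => // n IH [a s] [b t] /= H.
have AS : forall i j X Y, bnd i X -> bnd j Y -> (i + j < n)%N -> homF X Y.
  move=> i j X Y /allP bX /allP bY Hn; apply: hom_lift => p q Hp Hq.
  apply: IH; move: (bX _ Hp) (bY _ Hq) => /= h1 h2; lia.
rewrite /homF.
case: s H => [|x s] H; case: t H => [|y t] H; rewrite ?single_nil ?single_cons.
- exact: hom_DD.
- exact: hom_DL.
- exact: hom_LD.
- rewrite /= in H.
  apply: hom_LL; (apply: AS; [apply: bnd_single || (apply: bnd_Pr; apply: bnd_single)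
                          | apply: bnd_single || (apply: bnd_Pr; apply: bnd_single) |]);
  rewrite /=; lia.
Qed.

Lemma DT_hom (X Y : Sh) : EQ2 (DT (dia X Y)) (bul (DT X) (DT Y)).
Proof.
apply: hom_lift => p q _ _.
exact: (@hom_words (size p.2.2 + size q.2.2).+1).
Qed.

End DThom.

End MP11.
Import MP11.

Module MP12.
Set Implicit Arguments.
Unset Strict Implicit.
Unset Printing Implicit Defensive.
Import GRing.Theory.
Local Open Scope ring_scope.

Section ET.
Variables (k A : comPzRingType) (iota : {rmorphism k -> A}).
Variable eA : A -> k.
Hypothesis eA_lin : forall c a b, eA (iota c * a + b) = c * eA a + eA b.
Hypothesis eA_mul : forall a b, eA (a * b) = eA a * eA b.
Hypothesis eA_1 : eA 1 = 1.
Notation Sh := (Sha k A).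
Notation Sh2 := (Sha2 k A).
Notation EQ := (@EQF k (nw A)).
Notation EQF2 := (@EQF k (nw A * nw A)).
Notation dw := (dia_word k).
Notation L := (@Defs.prefix k A).
Notation D := (delta k).
Notation ML1 := (ML1 iota).
Notation ML2 := (ML2 iota).
Notation EQ2 := (EQ2 iota).
Notation EQ1 := (EQ1 iota).

Lemma scaleo (c x : k) : (c *: (x : k^o)) = c * x.
Proof. by []. Qed.

Lemma eT_feval (X : Sh) : eT eA X = feval (M := k^o) (eTw eA) X.
Proof. by []. Qed.

Lemma eTw_cons a (w : nw A) : eTw eA (a, wd w) = eA a * eTw eA w.
Proof. by rewrite /eTw /= big_cons. Qed.

Lemma eTw_ML : ML1 (M := k^o) (eTw eA).
Proof.
split=> [s c a b|a0 u v c a b]; rewrite /eTw /=.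
- by rewrite eA_lin scaleo mulrDl mulrA.
- rewrite !big_cat !big_cons /= eA_lin scaleo; ring.
Qed.

Lemma feval_eT_prefix c (W : Sh) :
  feval (M := k^o) (eTw eA) (L c W) = eA c * feval (M := k^o) (eTw eA) W.
Proof.
rewrite feval_prefix /feval mulr_sumr; apply: eq_bigr => p _.
by rewrite eTw_cons !scaleo; ring.
Qed.

Lemma eTw_dw_aux n (a1 : A) a' (b1 : A) b' : (size a' + size b' < n)%N ->
  feval (M := k^o) (eTw eA) (diaw k n a1 a' b1 b') = eTw eA (a1, a') * eTw eA (b1, b').
Proof.
elim: n a1 a' b1 b' => // n IH a1 a' b1 b' H.
case: a' H => [|a2 a''] H; case: b' H => [|b2 b''] H.
- by rewrite /= feval_single /eTw /= !big_nil eA_mul; ring.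
- by rewrite /= feval_single /eTw /= eA_mul big_nil; ring.
- by rewrite /= feval_single /eTw /= eA_mul big_nil; ring.
- rewrite /= in H.
  have -> : diaw k n.+1 a1 (a2 :: a'') b1 (b2 :: b'') = L (a1 * b1)
    (diaw k n a2 a'' 1 (b2 :: b'') ++ diaw k n 1 (a2 :: a'') b2 b'' ++
     negc (L 1 (diaw k n a2 a'' b2 b''))) by [].
  rewrite feval_eT_prefix !feval_cat feval_negc feval_eT_prefix.
  rewrite IH /=; last lia.
  rewrite IH /=; last lia.
  rewrite IH /=; last lia.
  rewrite /eTw /= !big_cons eA_mul eA_1. ring.
Qed.

Lemma eTw_dw u v : feval (M := k^o) (eTw eA) (dw u v) = eTw eA u * eTw eA v.
Proof. by rewrite /dia_word eTw_dw_aux // -!surjective_pairing. Qed.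

Lemma eT_congr x y : EQ1 x y -> eT eA x = eT eA y.
Proof. by move=> H; rewrite !eT_feval; exact: (H k^o (eTw eA) eTw_ML). Qed.

Lemma eT_mul x y : eT eA (dia x y) = eT eA x * eT eA y.
Proof.
rewrite !eT_feval feval_dia.
under feval_ext => u do under feval_ext => v do rewrite eTw_dw.
rewrite /feval /= mulr_suml; apply: eq_bigr => p _.
rewrite scaleo mulr_sumr mulr_sumr; apply: eq_bigr => q _.
rewrite !scaleo; ring.
Qed.

Lemma eT_unit : eT eA (muT A 1) = 1.
Proof. by rewrite /eT /muT /eTw /= big_cons big_nil big_nil eA_1 /= !mulr1 addr0. Qed.

End ET.

End MP12.
Import MP12.

Module MP13.
Set Implicit Arguments.
Unset Strict Implicit.
Unset Printing Implicit Defensive.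
Import GRing.Theory.
Local Open Scope ring_scope.

Section Counit.
Variables (k A : comPzRingType) (iota : {rmorphism k -> A}).
Variable DA : A -> fcomb k (A * A).
Variable eA : A -> k.
Hypothesis DA_1 : eqAA iota (DA 1) [:: (1, (1, 1))].
Hypothesis eA_lin : forall c a b, eA (iota c * a + b) = c * eA a + eA b.
Hypothesis eA_mul : forall a b, eA (a * b) = eA a * eA b.
Hypothesis eA_1 : eA 1 = 1.
Hypothesis counit : forall a, \sum_(p <- DA a) iota (p.1 * eA p.2.1) * p.2.2 = a.
Notation Sh := (Sha k A).
Notation Sh2 := (Sha2 k A).
Notation EQ := (@EQF k (nw A)).
Notation EQF2 := (@EQF k (nw A * nw A)).
Notation dw := (dia_word k).
Notation L := (@Defs.prefix k A).
Notation D := (delta k).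
Notation ML1 := (ML1 iota).
Notation ML2 := (ML2 iota).
Notation EQ2 := (EQ2 iota).
Notation EQ1 := (EQ1 iota).
Notation DT := (DT DA).
Notation eT_id := (eT_id eA).

Lemma feval_eTid (M : lmodType k) (g : nw A -> M) (Y : Sh2) :
  feval g (eT_id Y) = feval (fun p => eTw eA p.1 *: g p.2) Y.
Proof. by rewrite /feval big_map; apply: eq_bigr => p _; rewrite scalerA. Qed.

Lemma feval_scalel T (M : lmodType k) (f : T -> k) (m : M) (X : fcomb k T) :
  feval (fun r => f r *: m) X = (feval (M := k^o) f X) *: m.
Proof.
rewrite /feval scaler_suml; apply: eq_bigr => p _.
by rewrite scalerA.
Qed.

Lemma ML1_eTw_scale (M : lmodType k) (m : M) : ML1 (fun u => eTw eA u *: m).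
Proof.
case: (eTw_ML eA_lin) => H1 H2; split=> [s c a b|a0 u v c a b] /=.
- by rewrite (H1 s c a b) scaleo scalerDl scalerA.
- by rewrite (H2 a0 u v c a b) scaleo scalerDl scalerA.
Qed.

#[export] Instance eTid_Proper : Proper (EQ2 ==> EQ1) eT_id.
Proof.
move=> x y H M g Hg; rewrite !feval_eTid; apply: H; split=> v.
- exact: (ML1_eTw_scale (g v)).
- exact: (ML1_scale (eTw eA v) Hg).
Qed.

Lemma eTid_bul (Y Z : Sh2) : EQ (eT_id (bul Y Z)) (dia (eT_id Y) (eT_id Z)).
Proof.
move=> M g; rewrite feval_eTid feval_bul feval_dia feval_eTid.
apply: feval_ext => p; rewrite feval_eTid -feval_scale; apply: feval_ext => q.
rewrite /Phi feval_swap.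
rewrite /=.
under feval_ext => v do rewrite feval_scalel eTw_dw //.
by rewrite feval_scale scalerA.
Qed.

Lemma eTid_idPr (Y : Sh2) : eT_id (idPr Y) = Pr (eT_id Y).
Proof. by rewrite /Defs.eT_id /idPr /Pr -!map_comp. Qed.

Lemma lin1_sum (M : lmodType k) (f : A -> M) (l : fcomb k (A * A)) (c : k * (A * A) -> k) :
  lin1 iota f -> f (\sum_(p <- l) iota (c p) * p.2.2) = \sum_(p <- l) c p *: f p.2.2.
Proof.
move=> H.
have f0 : f 0 = 0.
  have E := H 1 0 0; rewrite rmorph1 mul1r addr0 scale1r in E.
  by apply: (addrI (f 0)); rewrite addr0 -E.
elim: l => [|p l IH]; first by rewrite !big_nil.
by rewrite !big_cons H IH.
Qed.

Lemma eTid_lift a : EQ1 (eT_id (liftAA (DA a))) (D a).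
Proof.
move=> M g [H1 _]; rewrite feval_eTid feval_liftAA feval_single.
rewrite -{2}(counit a).
have := lin1_sum (DA a) (fun p => p.1 * eA p.2.1) (H1 [::]); rewrite /= => ->.
rewrite /feval; apply: eq_bigr => p _ /=; rewrite /eTw /= big_nil mulr1 scalerA.
by [].
Qed.

Lemma eTid_DT_word n : forall (w : nw A), (size w.2 < n)%N ->
  EQ1 (eT_id (DT [:: (1, w)])) [:: (1, w)].
Proof.
elim: n => // n IH [a [|x s]] /= H.
  by rewrite single_nil (DT_delta _ _) eTid_lift.
rewrite single_cons (DT_L DA_1) (eTid_bul _ _) eTid_idPr (IH (x, s)) //.
rewrite eTid_lift (_ : Pr _ = L 1 [:: (1, (x, s))]) // (diaD2 a 1) mulr1.
reflexivity.
Qed.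

Lemma eTid_DT (X : Sh) : EQ1 (eT_id (DT X)) X.
Proof.
move=> M g Hg; rewrite feval_eTid feval_DT.
apply: feval_ext => w.
have := eTid_DT_word (ltnSn (size w.2)) Hg.
by rewrite feval_eTid feval_DT feval_single feval_single.
Qed.

End Counit.

End MP13.
Import MP13.

Module MP14.
Set Implicit Arguments.
Unset Strict Implicit.
Unset Printing Implicit Defensive.
Import GRing.Theory.
Local Open Scope ring_scope.

Section Sha3.
Variables (k A : comPzRingType) (iota : {rmorphism k -> A}).
Notation Sh := (Sha k A).
Notation Sh2 := (Sha2 k A).
Notation Sh3 := (Sha3 k A).
Notation T3 := ((nw A * nw A) * nw A)%type.
Notation EQF3 := (@EQF k T3).
Notation dw := (dia_word k).
Notation ML1 := (ML1 iota).
Notation ML2 := (ML2 iota).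

Definition ML3 (M : lmodType k) (G : T3 -> M) :=
  [/\ (forall v w, ML1 (fun u => G (u, v, w))),
      (forall u w, ML1 (fun v => G (u, v, w))) &
      (forall u v, ML1 (fun w => G (u, v, w)))].

Definition EQ3 (x y : Sh3) := forall (M : lmodType k) (G : T3 -> M),
  ML3 G -> feval G x = feval G y.

#[export] Instance EQ3_equiv : Equivalence EQ3.
Proof.
split; first by move=> x M g.
- by move=> x y H M g Hg; rewrite H.
- by move=> x y z H1 H2 M g Hg; rewrite H1 // H2.
Qed.

#[export] Instance EQF_EQ3_sub : subrelation EQF3 EQ3.
Proof. by move=> x y H M G _; apply: H. Qed.

Lemma F3 (x y : Sh3) : EQF3 x y -> EQ3 x y.
Proof. by move=> H M G _; apply: H. Qed.

Lemma eqSh3_EQ3 x y : eqSh3 iota x y <-> EQ3 x y.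
Proof.
split=> H M G.
- move=> [H1 H2 H3].
  have E z : feval (fun p => G (mkw (wd p.1.1), mkw (wd p.1.2), mkw (wd p.2))) z = feval G z.
    by apply: feval_ext => p; rewrite !mkw_wd -!surjective_pairing.
  rewrite -!E; apply: (H M (fun u v w => G (mkw u, mkw v, mkw w))).
  + by move=> v w; apply: (ML1_mkw (g := fun u => G (u, mkw v, mkw w))).
  + by move=> u w; apply: (ML1_mkw (g := fun v => G (mkw u, v, mkw w))).
  + by move=> u v; apply: (ML1_mkw (g := fun w => G (mkw u, mkw v, w))).
- move=> Hf1 Hf2 Hf3; apply: (H M (fun p => G (wd p.1.1) (wd p.1.2) (wd p.2))); split.
  + by move=> v w; apply: (ML1_wd (f := fun u => G u (wd v) (wd w))).
  + by move=> u w; apply: (ML1_wd (f := fun v => G (wd u) v (wd w))).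
  + by move=> u v; apply: (ML1_wd (f := fun w => G (wd u) (wd v) w)).
Qed.

Definition tens3 (U V W : Sh) : Sh3 :=
  flatten [seq flatten [seq [seq (r.1 * s.1 * t.1, (r.2, s.2, t.2)) | t <- W] | s <- V] | r <- U].

Lemma feval_tens3 (M : lmodType k) (G : T3 -> M) U V W :
  feval G (tens3 U V W) =
  feval (fun r => feval (fun s => feval (fun t => G (r, s, t)) W) V) U.
Proof.
rewrite /tens3 feval_flatten big_map /feval; apply: eq_bigr => r _.
rewrite -/(feval _ _) feval_flatten big_map scaler_sumr; apply: eq_bigr => s _.
rewrite /feval big_map !scaler_sumr; apply: eq_bigr => t _.
by rewrite !scalerA.
Qed.

Definition bul3 (X Y : Sh3) : Sh3 :=
  flatten [seq scalec (p.1 * q.1)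
    (tens3 (dw p.2.1.1 q.2.1.1) (dw p.2.1.2 q.2.1.2) (dw p.2.2 q.2.2)) | p <- X, q <- Y].

Definition Phi3 (M : lmodType k) (G : T3 -> M) (p q : T3) :=
  feval G (tens3 (dw p.1.1 q.1.1) (dw p.1.2 q.1.2) (dw p.2 q.2)).

Lemma feval_bul3 (M : lmodType k) (G : T3 -> M) (X Y : Sh3) :
  feval G (bul3 X Y) = feval (fun p => feval (fun q => Phi3 G p q) Y) X.
Proof.
rewrite /bul3 feval_flatten big_flatten /= big_map /feval; apply: eq_bigr => p _.
rewrite big_map scaler_sumr; apply: eq_bigr => q _.
by rewrite -/(feval _ _) feval_scalec scalerA.
Qed.

Definition idPr3 (Y : Sh3) : Sh3 := [seq (p.1, (p.2.1, (1, wd p.2.2))) | p <- Y].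

Lemma feval_idPr3 (M : lmodType k) (G : T3 -> M) (Y : Sh3) :
  feval G (idPr3 Y) = feval (fun p => G (p.1, (1, wd p.2))) Y.
Proof. by rewrite /feval big_map. Qed.

Lemma ML3_ext (M : lmodType k) (G G' : T3 -> M) : (forall p, G p = G' p) -> ML3 G -> ML3 G'.
Proof.
move=> E [H1 H2 H3]; split=> u v.
- by apply: (ML1_ext _ (H1 u v)) => w; rewrite E.
- by apply: (ML1_ext _ (H2 u v)) => w; rewrite E.
- by apply: (ML1_ext _ (H3 u v)) => w; rewrite E.
Qed.

Lemma ML3_feval T (M : lmodType k) (H : T3 -> T -> M) (Y : fcomb k T) :
  (forall t, ML3 (fun p => H p t)) -> ML3 (fun p => feval (H p) Y).
Proof.
move=> HH; split=> u v.
- by apply: (ML1_feval (h := fun w t => H (w, u, v) t)) => t; case: (HH t).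
- by apply: (ML1_feval (h := fun w t => H (u, w, v) t)) => t; case: (HH t).
- by apply: (ML1_feval (h := fun w t => H (u, v, w) t)) => t; case: (HH t).
Qed.

Lemma ML3_Phi3_l (M : lmodType k) (G : T3 -> M) q : ML3 G -> ML3 (fun p => Phi3 G p q).
Proof.
case=> H1 H2 H3; split=> u v.
- apply: (ML1_ext (g := fun w => feval (fun r => feval (fun s => feval (fun t => G (r, s, t))
      (dw v q.2)) (dw u q.1.2)) (dw w q.1.1))); first by move=> w; rewrite /Phi3 feval_tens3.
  apply: (dw_ML (g := fun r => feval (fun s => feval (fun t => G (r, s, t)) (dw v q.2)) (dw u q.1.2))).
  apply: ML1_feval => s; apply: ML1_feval => t; exact: H1.
- apply: (ML1_ext (g := fun w => feval (fun r => feval (fun s => feval (fun t => G (r, s, t))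
      (dw v q.2)) (dw w q.1.2)) (dw u q.1.1))); first by move=> w; rewrite /Phi3 feval_tens3.
  apply: ML1_feval => r.
  apply: (dw_ML (g := fun s => feval (fun t => G (r, s, t)) (dw v q.2))).
  apply: ML1_feval => t; exact: H2.
- apply: (ML1_ext (g := fun w => feval (fun r => feval (fun s => feval (fun t => G (r, s, t))
      (dw w q.2)) (dw v q.1.2)) (dw u q.1.1))); first by move=> w; rewrite /Phi3 feval_tens3.
  apply: ML1_feval => r; apply: ML1_feval => s.
  apply: (dw_ML (g := fun t => G (r, s, t))); exact: H3.
Qed.

Lemma ML3_Phi3_r (M : lmodType k) (G : T3 -> M) p : ML3 G -> ML3 (fun q => Phi3 G p q).
Proof.
case=> H1 H2 H3; split=> u v.
- apply: (ML1_ext (g := fun w => feval (fun r => feval (fun s => feval (fun t => G (r, s, t))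
      (dw p.2 v)) (dw p.1.2 u)) (dw p.1.1 w))); first by move=> w; rewrite /Phi3 feval_tens3.
  apply: (dw_MLr (g := fun r => feval (fun s => feval (fun t => G (r, s, t)) (dw p.2 v)) (dw p.1.2 u))).
  apply: ML1_feval => s; apply: ML1_feval => t; exact: H1.
- apply: (ML1_ext (g := fun w => feval (fun r => feval (fun s => feval (fun t => G (r, s, t))
      (dw p.2 v)) (dw p.1.2 w)) (dw p.1.1 u))); first by move=> w; rewrite /Phi3 feval_tens3.
  apply: ML1_feval => r.
  apply: (dw_MLr (g := fun s => feval (fun t => G (r, s, t)) (dw p.2 v))).
  apply: ML1_feval => t; exact: H2.
- apply: (ML1_ext (g := fun w => feval (fun r => feval (fun s => feval (fun t => G (r, s, t))
      (dw p.2 w)) (dw p.1.2 v)) (dw p.1.1 u))); first by move=> w; rewrite /Phi3 feval_tens3.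
  apply: ML1_feval => r; apply: ML1_feval => s.
  apply: (dw_MLr (g := fun t => G (r, s, t))); exact: H3.
Qed.

#[export] Instance bul3_Proper : Proper (EQ3 ==> EQ3 ==> EQ3) bul3.
Proof.
move=> x x' Hx y y' Hy M G HG; rewrite !feval_bul3 Hx; last first.
  by apply: ML3_feval => q; apply: ML3_Phi3_l.
apply: feval_ext => p; apply: Hy; exact: ML3_Phi3_r.
Qed.

#[export] Instance idPr3_Proper : Proper (EQ3 ==> EQ3) idPr3.
Proof.
move=> x x' Hx M G [H1 H2 H3]; rewrite !feval_idPr3 Hx //; split=> u v.
- exact: (H1 u (1, wd v)).
- exact: (H2 u (1, wd v)).
- exact: (ML1_prefix (g := fun w => G (u, v, w)) 1 (H3 u v)).
Qed.

End Sha3.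

End MP14.
Import MP14.

Module MP15.
Set Implicit Arguments.
Unset Strict Implicit.
Unset Printing Implicit Defensive.
Import GRing.Theory.
Local Open Scope ring_scope.

Section Coass.
Variables (k A : comPzRingType) (iota : {rmorphism k -> A}).
Variable DA : A -> fcomb k (A * A).
Hypothesis DA_lin : forall c a b, eqAA iota (DA (iota c * a + b)) (scalec c (DA a) ++ DA b).
Hypothesis DA_1 : eqAA iota (DA 1) [:: (1, (1, 1))].
Hypothesis DA_mul : forall a b, eqAA iota (DA (a * b)) (mulAA (DA a) (DA b)).
Hypothesis DA_coass : forall a, eqAAA iota
         (flatten [seq [seq (p.1 * q.1, (q.2.1, q.2.2, p.2.2)) | q <- DA p.2.1] | p <- DA a])
         (flatten [seq [seq (p.1 * q.1, (p.2.1, q.2.1, q.2.2)) | q <- DA p.2.2] | p <- DA a]).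
Notation Sh := (Sha k A).
Notation Sh2 := (Sha2 k A).
Notation Sh3 := (Sha3 k A).
Notation T3 := ((nw A * nw A) * nw A)%type.
Notation EQF3 := (@EQF k T3).
Notation EQF2 := (@EQF k (nw A * nw A)).
Notation dw := (dia_word k).
Notation L := (@Defs.prefix k A).
Notation D := (delta k).
Notation ML1 := (ML1 iota).
Notation ML2 := (ML2 iota).
Notation ML3 := (ML3 iota).
Notation EQ2 := (EQ2 iota).
Notation EQ3 := (EQ3 iota).
Notation DT := (DT DA).
Notation DTl := (DTl DA).
Notation DT_id := (DT_id DA).
Notation id_DT := (id_DT DA).

Lemma feval_DTid (M : lmodType k) (G : T3 -> M) (Y : Sh2) :
  feval G (DT_id Y) = feval (fun p => feval (fun q => G (q.1, q.2, p.2)) (DTl p.1.1 p.1.2)) Y.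
Proof.
rewrite /Defs.DT_id feval_flatten big_map /feval; apply: eq_bigr => p _.
by rewrite big_map scaler_sumr; apply: eq_bigr => q _; rewrite scalerA.
Qed.

Lemma feval_idDT (M : lmodType k) (G : T3 -> M) (Y : Sh2) :
  feval G (id_DT Y) = feval (fun p => feval (fun q => G (p.1, q.1, q.2)) (DTl p.2.1 p.2.2)) Y.
Proof.
rewrite /Defs.id_DT feval_flatten big_map /feval; apply: eq_bigr => p _.
by rewrite big_map scaler_sumr; apply: eq_bigr => q _; rewrite scalerA.
Qed.

#[export] Instance DTid_Proper : Proper (EQ2 ==> EQ3) DT_id.
Proof.
move=> x y H M G [H1 H2 H3]; rewrite !feval_DTid; apply: H; split=> v.
- apply: (FD_ML DA_lin DA_1 (G := fun q => G (q.1, q.2, v))); split=> w.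
  + exact: (H1 w v).
  + exact: (H2 w v).
- exact: (@ML1_feval k A iota _ M (fun w q => G (q.1, q.2, w)) (DTl v.1 v.2) (fun q => H3 q.1 q.2)).
Qed.

#[export] Instance idDT_Proper : Proper (EQ2 ==> EQ3) id_DT.
Proof.
move=> x y H M G [H1 H2 H3]; rewrite !feval_idDT; apply: H; split=> v.
- exact: (@ML1_feval k A iota _ M (fun w q => G (w, q.1, q.2)) (DTl v.1 v.2) (fun q => H1 q.1 q.2)).
- apply: (FD_ML DA_lin DA_1 (G := fun q => G (v, q.1, q.2))); split=> w.
  + exact: (H2 v w).
  + exact: (H3 v w).
Qed.

Lemma DTid_idPr (Q : Sh2) : EQF3 (DT_id (idPr Q)) (idPr3 (DT_id Q)).
Proof. by move=> M G; rewrite feval_DTid feval_idPr feval_idPr3 feval_DTid. Qed.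

Lemma idDT_idPr (Q : Sh2) : EQF3 (id_DT (idPr Q)) (idPr3 (id_DT Q)).
Proof.
move=> M G; rewrite feval_idDT feval_idPr feval_idPr3 feval_idDT.
by apply: feval_ext => p; rewrite /= eqxx feval_idPr.
Qed.

Lemma coass_base a : EQ3 (DT_id (liftAA (DA a))) (id_DT (liftAA (DA a))).
Proof.
move=> M G [H1 H2 H3].
have E1 : feval G (DT_id (liftAA (DA a))) =
  feval (fun p => G ((p.1.1, [::]), (p.1.2, [::]), (p.2, [::])))
    (flatten [seq [seq (p.1 * q.1, (q.2.1, q.2.2, p.2.2)) | q <- DA p.2.1] | p <- DA a]).
  rewrite feval_DTid feval_liftAA feval_flatten big_map /feval; apply: eq_bigr => p _ /=.
  by rewrite big_map big_map scaler_sumr; apply: eq_bigr => q _; rewrite scalerA.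
have E2 : feval G (id_DT (liftAA (DA a))) =
  feval (fun p => G ((p.1.1, [::]), (p.1.2, [::]), (p.2, [::])))
    (flatten [seq [seq (p.1 * q.1, (p.2.1, q.2.1, q.2.2)) | q <- DA p.2.2] | p <- DA a]).
  rewrite feval_idDT feval_liftAA feval_flatten big_map /feval; apply: eq_bigr => p _ /=.
  by rewrite big_map big_map scaler_sumr; apply: eq_bigr => q _; rewrite scalerA.
rewrite E1 E2.
apply: (@DA_coass a M (fun x y z => G ((x, [::]), (y, [::]), (z, [::])))).
- by move=> b d c a1 a2; case: (H1 (b, [::]) (d, [::])) => /= L1 _; apply: L1.
- by move=> a1 d c b1 b2; case: (H2 (a1, [::]) (d, [::])) => /= L1 _; apply: L1.
- by move=> a1 b c d1 d2; case: (H3 (a1, [::]) (b, [::])) => /= L1 _; apply: L1.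
Qed.

Lemma DT_hom_word (M : lmodType k) (G : nw A * nw A -> M) u v : ML2 G ->
  feval G (DT (dw u v)) =
  feval (fun a => feval (fun b => Phi G a b) (DTl v.1 v.2)) (DTl u.1 u.2).
Proof.
move=> HG; have := DT_hom DA_1 DA_mul [:: (1, u)] [:: (1, v)] HG.
rewrite feval_DT feval_dia !feval_single feval_bul (feval_DT DA _ [:: (1, u)]) feval_single.
rewrite (feval_DT DA _ (dw u v)) => ->; apply: feval_ext => a.
by rewrite feval_DT feval_single.
Qed.

Lemma DTid_bul (P Q : Sh2) : EQ3 (DT_id (bul P Q)) (bul3 (DT_id P) (DT_id Q)).
Proof.
move=> M G [H1 H2 H3].
rewrite feval_DTid feval_bul feval_bul3 feval_DTid; apply: feval_ext => x.
under [RHS]feval_ext => a do rewrite feval_DTid.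
rewrite feval_swap; apply: feval_ext => y.
have HGs : forall s, ML2 (fun q => G (q.1, q.2, s)).
  by move=> s; split=> w; [exact: (H1 w s) | exact: (H2 w s)].
rewrite /Phi /= feval_swap.
under feval_ext => s do rewrite -(feval_DT DA (fun q => G (q.1, q.2, s)) (dw x.1 y.1)) (DT_hom_word _ _ (HGs s)).
rewrite feval_swap; apply: feval_ext => a.
rewrite feval_swap; apply: feval_ext => b.
rewrite /Phi3 feval_tens3 /Phi /= feval_swap; apply: feval_ext => r.
by rewrite feval_swap.
Qed.

Lemma idDT_bul (P Q : Sh2) : EQ3 (id_DT (bul P Q)) (bul3 (id_DT P) (id_DT Q)).
Proof.
move=> M G [H1 H2 H3].
rewrite feval_idDT feval_bul feval_bul3 feval_idDT; apply: feval_ext => x.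
under [RHS]feval_ext => a do rewrite feval_idDT.
rewrite feval_swap; apply: feval_ext => y.
have HGr : forall r, ML2 (fun q => G (r, q.1, q.2)).
  by move=> r; split=> w; [exact: (H2 r w) | exact: (H3 r w)].
rewrite /Phi /=.
under feval_ext => r do rewrite -(feval_DT DA (fun q => G (r, q.1, q.2)) (dw x.2 y.2)) (DT_hom_word _ _ (HGr r)).
rewrite feval_swap; apply: feval_ext => a.
rewrite feval_swap; apply: feval_ext => b.
by rewrite /Phi3 feval_tens3 /Phi.
Qed.

Lemma coass_word n : forall (w : nw A), (size w.2 < n)%N ->
  EQ3 (DT_id (DT [:: (1, w)])) (id_DT (DT [:: (1, w)])).
Proof.
elim: n => // n IH [a [|x s]] /= H.
  by rewrite single_nil (F2 (DT_delta _ _)) coass_base.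
rewrite single_cons (DT_L DA_1) DTid_bul idDT_bul (F3 (DTid_idPr _)) (F3 (idDT_idPr _)).
by rewrite (IH (x, s)) // coass_base.
Qed.

Lemma coass (X : Sh) : EQ3 (DT_id (DT X)) (id_DT (DT X)).
Proof.
move=> M G HG; rewrite feval_DTid feval_idDT !feval_DT.
apply: feval_ext => w.
have := coass_word (ltnSn (size w.2)) HG.
by rewrite feval_DTid feval_idDT !feval_DT !feval_single.
Qed.

End Coass.

End MP15.
Import MP15.

Import GRing.Theory.
Local Open Scope ring_scope.

Theorem theorem3p8 (k A : comPzRingType) (iota : {rmorphism k -> A})
    (DA : A -> fcomb k (A * A)) (eA : A -> k) :
  left_counital_bialgebra iota DA eA ->
  ((forall x x' y y', eqSh iota x x' -> eqSh iota y y' ->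
        eqSh iota (dia x y) (dia x' y'))
   /\ (forall x y z, eqSh iota (dia (dia x y) z) (dia x (dia y z)))
   /\ (forall x y, eqSh iota (dia x y) (dia y x))
   /\ (forall (c : k) x, eqSh iota (dia (muT A c) x) (scalec c x)))
  /\ ((forall x x', eqSh iota x x' -> eqSh iota (Pr x) (Pr x'))
   /\ (forall x y, eqSh iota (dia (Pr x) (Pr y))
         (Pr (dia (Pr x) y) ++ Pr (dia x (Pr y)) ++ negc (Pr (Pr (dia x y))))))
  /\ ((forall x x', eqSh iota x x' -> eqSh2 iota (DT DA x) (DT DA x'))
   /\ (forall x y, eqSh2 iota (DT DA (dia x y)) (bul (DT DA x) (DT DA y)))
   /\ eqSh2 iota (DT DA (muT A 1)) (unit2 k A))
  /\ ((forall x x', eqSh iota x x' -> eT eA x = eT eA x')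
   /\ (forall x y, eT eA (dia x y) = eT eA x * eT eA y)
   /\ eT eA (muT A 1) = 1)
  /\ (forall x, eqSh3 iota (DT_id DA (DT DA x)) (id_DT DA (DT DA x)))
  /\ (forall x, eqSh iota (eT_id eA (DT DA x)) x)
  /\ (forall x, eqSh2 iota (DT DA (Pr x)) (idPr (DT DA x))).
Proof.
case=> DA_lin [DA_mul DA_1] DA_coass [eA_lin [eA_mul eA_1]] counit.
split; [|split; [|split; [|split; [|split; [|split]]]]].
- split; [|split; [|split]].
  + move=> x x' y y' /eqSh_EQ1 Hx /eqSh_EQ1 Hy; apply/eqSh_EQ1.
    by rewrite Hx Hy.
  + move=> x y z; apply/eqSh_EQ1; apply: EQF_EQ1; exact: dia_assoc.
  + move=> x y; apply/eqSh_EQ1; apply: EQF_EQ1; exact: dia_comm.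
  + move=> c x; apply/eqSh_EQ1; apply: EQF_EQ1; exact: dia_unit.
- split.
  + move=> x x' /eqSh_EQ1 Hx; apply/eqSh_EQ1; by rewrite Hx.
  + move=> x y; apply/eqSh_EQ1; apply: EQF_EQ1.
    by rewrite Nij Pr_cat Pr_cat Pr_neg cat_swap.
- split; [|split].
  + move=> x x' /eqSh_EQ1 Hx; apply/eqSh2_EQ2.
    by rewrite (DT_Proper1 DA_lin DA_1 Hx).
  + move=> x y; apply/eqSh2_EQ2; exact: DT_hom.
  + apply/eqSh2_EQ2 => M G HG.
    rewrite feval_DT /muT feval_single /= (liftAA_eq DA_1 HG).
    by [].
- split; [|split].
  + move=> x x' /eqSh_EQ1 Hx; exact: (eT_congr eA_lin Hx).
  + move=> x y; exact: eT_mul.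
  + exact: eT_unit.
- move=> x; apply/eqSh3_EQ3; exact: coass.
- move=> x; apply/eqSh_EQ1; exact: eTid_DT.
- move=> x; apply/eqSh2_EQ2; apply: F2; exact: DT_Pr.
Qed.
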